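(* Let $\theta:[0,T]\times\Omega\to\mathbb R^3$ be a (sufficiently smooth) solution on $[0,T]$ of \[ w^\alpha\mu^{3\gamma-3}\Big(\partial_{\tau\tau}\theta_i+\tfrac{\mu_\tau}{\mu}\partial_\tau\theta_i+2\Gamma^*_{ij}\partial_\tau\theta_j\Big)+\delta w^\alpha\Lambda_{i\ell}\theta_\ell+\Big(w^{1+\alpha}\Lambda_{ij}\big(\mathscr A^k_j\mathscr J^{-1/\alpha}-\delta^k_j\big)\Big)_{,k}=0, \] with $\mathbf V=\partial_\tau\theta$. Then for every $\tau\in[0,T]$, \[ \mathrm{Curl}_{\Lambda\mathscr A}\mathbf V(\tau)=\frac{\mu(0)\mathrm{Curl}_{\Lambda\mathscr A}\mathbf V(0)}{\mu(\tau)}+\frac1{\mu(\tau)}\int_0^\tau\mu[\partial_\tau,\mathrm{Curl}_{\Lambda\mathscr A}]\mathbf V\,d\tau'-\frac2{\mu(\tau)}\int_0^\tau\mu\,\mathrm{Curl}_{\Lambda\mathscr A}(\Gamma^*\mathbf V)\,d\tau' \] and \begin{align*} \mathrm{Curl}_{\Lambda\mathscr A}\theta(\tau)&=\mathrm{Curl}_{\Lambda\mathscr A}\theta(0)+\mu(0)\mathrm{Curl}_{\Lambda\mathscr A}\mathbf V(0)\int_0^\tau\frac{d\tau'}{\mu(\tau')}+\int_0^\tau[\partial_\tau,\mathrm{Curl}_{\Lambda\mathscr A}]\theta(\tau')\,d\tau'\\ &\quad+\int_0^\tau\frac1{\mu(\tau')}\int_0^{\tau'}\mu(\tau'')[\partial_\tau,\mathrm{Curl}_{\Lambda\mathscr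 A}]\mathbf V\,d\tau''d\tau'-\int_0^\tau\frac2{\mu(\tau')}\int_0^{\tau'}\mu(\tau'')\mathrm{Curl}_{\Lambda\mathscr A}(\Gamma^*\mathbf V)\,d\tau''d\tau'. \end{align*}
   Context: Fix $\gamma>1$, $\alpha=\frac1{\gamma-1}$, $\delta>0$, $(A_0,A_1)\in\mathrm{GL}^+(3)\times\mathbb M^{3\times3}$; $A(t)\in\mathrm{GL}^+(3)$ is the global solution of $A''=\delta(\det A)^{1-\gamma}A^{-\top}$, $A(0)=A_0$, $A'(0)=A_1$. $\mu=(\det A)^{1/3}$, $O=A/\mu$, time $\tau$ given by $d\tau/dt=1/\mu$, $\tau(0)=0$; $\Lambda=(\det A)^{2/3}A^{-1}A^{-\top}$, $\Gamma^*=O^{-1}\partial_\tau O$, all as functions of $\tau$. $\Omega=B_1(0)\subset\mathbb R^3$, $w(y)=\frac{\delta(\gamma-1)}{2\gamma}(1-|y|^2)$. $\eta=y+\theta$, $\mathscr A=[D\eta]^{-1}$, $\mathscr J=\det D\eta$; Einstein summation, $F_{,k}=\partial_{y_k}F$. For $\mathbf F:\Omega\to\mathbb R^3$ (or $\mathbb R^3$-valued), $[\mathrm{Curl}_{\Lambda\mathscr A}\mathbf F]^i_j=\Lambda_{jm}\mathscr A^s_m\mathbf F^i_{,s}-\Lambda_{im}\mathscr A^s_m\mathbf F^j_{,s}$, and for time-dependent $\mathbf F$, $[\partial_\tau,\mathrm{Curl}_{\Lambda\mathscr A}]\mathbf F:=\partial_\tau(\mathrm{Curl}_{\Lambda\mathscr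 A}\mathbf F)-\mathrm{Curl}_{\Lambda\mathscr A}(\partial_\tau\mathbf F)$, i.e. $[\partial_\tau,\mathrm{Curl}_{\Lambda\mathscr A}]\mathbf F^k_j=\partial_\tau(\Lambda_{jm}\mathscr A^s_m)\mathbf F^k_{,s}-\partial_\tau(\Lambda_{km}\mathscr A^s_m)\mathbf F^j_{,s}$. $\Gamma^*\mathbf V$ is the matrix–vector product. *)

(* Defs.v *)
From Stdlib Require Import Reals Lra.
From Coquelicot Require Import Coquelicot.
Open Scope R_scope.

(** 3x3 matrices and 3-vectors, indexed by naturals 0,1,2
    (entries at indices >= 3 are never used). *)
Definition mat := nat -> nat -> R.
Definition vec := nat -> R.

Definition sum3 (f : nat -> R) : R := f 0%nat + f 1%nat + f 2%nat.
Definition kron (i j : nat) : R := if Nat.eqb i j then 1 else 0.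

Definition det3 (M : mat) : R :=
    M 0%nat 0%nat * (M 1%nat 1%nat * M 2%nat 2%nat - M 1%nat 2%nat * M 2%nat 1%nat)
  - M 0%nat 1%nat * (M 1%nat 0%nat * M 2%nat 2%nat - M 1%nat 2%nat * M 2%nat 0%nat)
  + M 0%nat 2%nat * (M 1%nat 0%nat * M 2%nat 1%nat - M 1%nat 1%nat * M 2%nat 0%nat).

Definition cof3 (M : mat) (i j : nat) : R :=
  let i1 := ((i + 1) mod 3)%nat in let i2 := ((i + 2) mod 3)%nat in
  let j1 := ((j + 1) mod 3)%nat in let j2 := ((j + 2) mod 3)%nat in
  M i1 j1 * M i2 j2 - M i1 j2 * M i2 j1.

Definition inv3 (M : mat) : mat := fun i j => cof3 M j i / det3 M.

Definition pt := (R * R * R)%type.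
Definition coord (y : pt) (k : nat) : R :=
  match k with 0%nat => fst (fst y) | 1%nat => snd (fst y) | _ => snd y end.
Definition shift (y : pt) (k : nat) (h : R) : pt :=
  match k with
  | 0%nat => ((fst (fst y) + h, snd (fst y)), snd y)
  | 1%nat => ((fst (fst y), snd (fst y) + h), snd y)
  | _ => (fst y, snd y + h)
  end.

Definition inOmega (y : pt) : Prop :=
  coord y 0 ^ 2 + coord y 1 ^ 2 + coord y 2 ^ 2 < 1.

Definition wfun (gamma delta : R) (y : pt) : R :=
  delta * (gamma - 1) / (2 * gamma) * (1 - (coord y 0 ^ 2 + coord y 1 ^ 2 + coord y 2 ^ 2)).
Definition alpha (gamma : R) : R := / (gamma - 1).

Definition pdy (k : nat) (f : pt -> R) (y : pt) : R :=
  Derive (fun h => f (shift y k h)) 0.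

(** partial derivatives in (tau, y): direction 0 is tau, direction k+1 is y_k *)
Definition pd (d : nat) (g : R -> pt -> R) : R -> pt -> R :=
  match d with
  | 0%nat => fun s y => Derive (fun r => g r y) s
  | S k => fun s y => pdy k (g s) y
  end.
Definition pds (ds : list nat) (g : R -> pt -> R) : R -> pt -> R :=
  List.fold_right pd g ds.
Definition ex_pd (d : nat) (g : R -> pt -> R) (s : R) (y : pt) : Prop :=
  match d with
  | 0%nat => ex_derive (fun r => g r y) s
  | S k => ex_derive (fun h => g s (shift y k h)) 0
  end.

Definition smooth_on (U : R -> pt -> Prop) (g : R -> pt -> R) : Prop :=
  forall (ds : list nat) (s : R) (y : pt), U s y ->
    continuous (fun p : R * pt => pds ds g (fst p) (snd p)) (s, y) /\
    (forall d : nat, (d <= 3)%nat -> ex_pd d (pds ds g) s y).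

(** Lagrangian quantities: eta = y + theta, D eta, scriptA = [D eta]^{-1}
    (scriptA^k_j = entry (k,j)), scriptJ = det D eta *)
Definition Deta (theta : R -> pt -> vec) (s : R) (y : pt) : mat :=
  fun i j => kron i j + pdy j (fun z => theta s z i) y.
Definition Acal (theta : R -> pt -> vec) (s : R) (y : pt) : mat :=
  inv3 (Deta theta s y).
Definition Jac (theta : R -> pt -> vec) (s : R) (y : pt) : R :=
  det3 (Deta theta s y).

(** quantities of the affine motion, as functions of tau;
    tt is t as a function of tau *)
Definition mu_of (A : R -> mat) (tt : R -> R) (s : R) : R :=
  Rpower (det3 (A (tt s))) (1/3).
Definition O_of (A : R -> mat) (tt : R -> R) (s : R) : mat :=
  fun i j => A (tt s) i j / mu_of A tt s.
Definition Lam_of (A : R -> mat) (tt : R -> R) (s : R) : mat :=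
  fun i j => Rpower (det3 (A (tt s))) (2/3) *
             sum3 (fun k => inv3 (A (tt s)) i k * inv3 (A (tt s)) j k).
Definition Gam_of (A : R -> mat) (tt : R -> R) (s : R) : mat :=
  fun i j => sum3 (fun k => inv3 (O_of A tt s) i k *
                            Derive (fun r => O_of A tt r k j) s).

Definition curlLA (L : mat) (Ac : pt -> mat) (F : pt -> vec) (y : pt) (i j : nat) : R :=
  sum3 (fun m => L j m * sum3 (fun k => Ac y k m * pdy k (fun z => F z i) y))
  - sum3 (fun m => L i m * sum3 (fun k => Ac y k m * pdy k (fun z => F z j) y)).

Definition commLA (L : R -> mat) (Ac : R -> pt -> mat) (F : R -> pt -> vec)
    (s : R) (y : pt) (k j : nat) : R :=
  sum3 (fun m => sum3 (fun q => Derive (fun r => L r j m * Ac r y q m) s *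
                                 pdy q (fun z => F s z k) y))
  - sum3 (fun m => sum3 (fun q => Derive (fun r => L r k m * Ac r y q m) s *
                                   pdy q (fun z => F s z j) y)).

Definition Vel (theta : R -> pt -> vec) (s : R) (y : pt) : vec :=
  fun i => Derive (fun r => theta r y i) s.
Definition GamV (G : R -> mat) (V : R -> pt -> vec) (s : R) (y : pt) : vec :=
  fun i => sum3 (fun j => G s i j * V s y j).

(* Main.v *)
Require Import Defs.
From Stdlib Require Import Reals Lra Lia Ranalysis5.
From Coquelicot Require Import Coquelicot.
Open Scope R_scope.

Lemma D_chg (f : R -> R) (x a b : R) : is_derive f x a -> a = b -> is_derive f x b.
Proof. intros H ->; exact H. Qed.
Lemma D_ext (f g : R -> R) (x l : R) : (forall t : R, f t = g t) -> is_derive f x l -> is_derive g x l.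
Proof. intros H1 H2. exact (is_derive_ext f g x l H1 H2). Qed.
Lemma D_plus (f g : R -> R) (x a b : R) : is_derive f x a -> is_derive g x b ->
  is_derive (fun t => f t + g t) x (a + b).
Proof. intros H H0; exact (is_derive_plus f g x a b H H0). Qed.
Lemma D_minus (f g : R -> R) (x a b : R) : is_derive f x a -> is_derive g x b ->
  is_derive (fun t => f t - g t) x (a - b).
Proof. intros H H0; exact (is_derive_minus f g x a b H H0). Qed.
Lemma D_mult (f g : R -> R) (x a b : R) : is_derive f x a -> is_derive g x b ->
  is_derive (fun t => f t * g t) x (a * g x + f x * b).
Proof. intros H H0; exact (is_derive_mult f g x a b H H0 Rmult_comm). Qed.
Lemma D_const (c : R) x : is_derive (fun _ => c) x 0.
Proof. exact (is_derive_const c x). Qed.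
Lemma D_id x : is_derive (fun t => t) x 1.
Proof. exact (is_derive_id x). Qed.
Lemma D_opp (f : R -> R) (x a : R) : is_derive f x a -> is_derive (fun t => - f t) x (- a).
Proof. intros H; exact (is_derive_opp f x a H). Qed.
Lemma D_inv (f : R -> R) (x a : R) : is_derive f x a -> f x <> 0 ->
  is_derive (fun t => / f t) x (- a / (f x * f x)).
Proof. intros H H0. eapply D_chg. exact (is_derive_inv f x a H H0). change (- a / (f x * (f x * 1)) = - a / (f x * f x)). rewrite Rmult_1_r; reflexivity. Qed.
Lemma D_div (f g : R -> R) (x a b : R) : is_derive f x a -> is_derive g x b -> g x <> 0 ->
  is_derive (fun t => f t / g t) x (a / g x - f x * b / (g x * g x)).
Proof. intros H1 H2 H3. eapply D_chg. apply (D_mult _ _ _ _ _ H1 (D_inv _ _ _ H2 H3)).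
 field; auto. Qed.

Ltac dstep := first [ eassumption | simple eapply D_const | simple eapply D_id | simple eapply D_plus | simple eapply D_minus | simple eapply D_mult
  | simple eapply D_opp ].
Ltac dpoly := repeat dstep.

Definition ddet3 (M N : mat) : R :=
  sum3 (fun p => sum3 (fun q => cof3 M p q * N p q)).

Lemma is_derive_det3 (M : R -> mat) (M' : mat) x :
  (forall p q, (p < 3)%nat -> (q < 3)%nat -> is_derive (fun h => M h p q) x (M' p q)) ->
  is_derive (fun h => det3 (M h)) x (ddet3 (M x) M').
Proof.
  intros H.
  assert (H00 := H 0%nat 0%nat ltac:(lia) ltac:(lia)).
  assert (H01 := H 0%nat 1%nat ltac:(lia) ltac:(lia)).
  assert (H02 := H 0%nat 2%nat ltac:(lia) ltac:(lia)).
  assert (H10 := H 1%nat 0%nat ltac:(lia) ltac:(lia)).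
  assert (H11 := H 1%nat 1%nat ltac:(lia) ltac:(lia)).
  assert (H12 := H 1%nat 2%nat ltac:(lia) ltac:(lia)).
  assert (H20 := H 2%nat 0%nat ltac:(lia) ltac:(lia)).
  assert (H21 := H 2%nat 1%nat ltac:(lia) ltac:(lia)).
  assert (H22 := H 2%nat 2%nat ltac:(lia) ltac:(lia)).
  unfold det3. eapply D_chg. dpoly.
  unfold ddet3, sum3, cof3; simpl. ring.
Qed.

Lemma lt3_cases (k : nat) : (k < 3)%nat -> k = 0%nat \/ k = 1%nat \/ k = 2%nat.
Proof. intros; lia. Qed.

Lemma is_derive_inv3 (M : R -> mat) (M' : mat) (x : R) k l :
  (forall p q, (p < 3)%nat -> (q < 3)%nat -> is_derive (fun h => M h p q) x (M' p q)) ->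
  det3 (M x) <> 0 -> (k < 3)%nat -> (l < 3)%nat ->
  is_derive (fun h => inv3 (M h) k l) x
    (- sum3 (fun p => sum3 (fun q => inv3 (M x) k p * M' p q * inv3 (M x) q l))).
Proof.
  intros H Hd Hk Hl.
  assert (Hdet := is_derive_det3 M M' x H).
  assert (H00 := H 0%nat 0%nat ltac:(lia) ltac:(lia)).
  assert (H01 := H 0%nat 1%nat ltac:(lia) ltac:(lia)).
  assert (H02 := H 0%nat 2%nat ltac:(lia) ltac:(lia)).
  assert (H10 := H 1%nat 0%nat ltac:(lia) ltac:(lia)).
  assert (H11 := H 1%nat 1%nat ltac:(lia) ltac:(lia)).
  assert (H12 := H 1%nat 2%nat ltac:(lia) ltac:(lia)).
  assert (H20 := H 2%nat 0%nat ltac:(lia) ltac:(lia)).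
  assert (H21 := H 2%nat 1%nat ltac:(lia) ltac:(lia)).
  assert (H22 := H 2%nat 2%nat ltac:(lia) ltac:(lia)).
  unfold inv3, ddet3, sum3, det3 in *.
  destruct (lt3_cases k Hk) as [ -> | [ -> | -> ] ]; destruct (lt3_cases l Hl) as [ -> | [ -> | -> ] ];
  (eapply D_chg; [ eapply D_div; [ unfold cof3; simpl; dpoly | exact Hdet | exact Hd] |
    unfold cof3; simpl; field; exact Hd ]).
Qed.

Lemma sum3_ext f g : (forall k, (k < 3)%nat -> f k = g k) -> sum3 f = sum3 g.
Proof. intros H; unfold sum3; rewrite !H by lia; reflexivity. Qed.
Lemma sum3_plus f g : sum3 (fun k => f k + g k) = sum3 f + sum3 g.
Proof. unfold sum3; ring. Qed.
Lemma sum3_minus f g : sum3 (fun k => f k - g k) = sum3 f - sum3 g.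
Proof. unfold sum3; ring. Qed.
Lemma sum3_scal c f : sum3 (fun k => c * f k) = c * sum3 f.
Proof. unfold sum3; ring. Qed.
Lemma sum3_scalr c f : sum3 (fun k => f k * c) = sum3 f * c.
Proof. unfold sum3; ring. Qed.
Lemma sum3_swap (f : nat -> nat -> R) :
  sum3 (fun a => sum3 (fun b => f a b)) = sum3 (fun b => sum3 (fun a => f a b)).
Proof. unfold sum3; ring. Qed.
Lemma sum3_kron l f : (l < 3)%nat -> sum3 (fun k => kron l k * f k) = f l.
Proof. intros Hl; destruct (lt3_cases l Hl) as [ -> | [ -> | -> ] ]; unfold sum3, kron; simpl; ring. Qed.
Lemma sum3_kron' l f : (l < 3)%nat -> sum3 (fun k => kron k l * f k) = f l.
Proof. intros Hl; destruct (lt3_cases l Hl) as [ -> | [ -> | -> ] ]; unfold sum3, kron; simpl; ring. Qed.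
Lemma kron_sym k l : kron k l = kron l k.
Proof. unfold kron; rewrite Nat.eqb_sym; reflexivity. Qed.

Lemma inv3_right M l m : det3 M <> 0 -> (l < 3)%nat -> (m < 3)%nat ->
  sum3 (fun q => M l q * inv3 M q m) = kron l m.
Proof.
  intros Hd Hl Hm. unfold inv3, sum3, det3 in *.
  destruct (lt3_cases l Hl) as [ -> | [ -> | -> ] ]; destruct (lt3_cases m Hm) as [ -> | [ -> | -> ] ];
  unfold cof3, kron; simpl; field; exact Hd.
Qed.
Lemma inv3_left M l m : det3 M <> 0 -> (l < 3)%nat -> (m < 3)%nat ->
  sum3 (fun q => inv3 M l q * M q m) = kron l m.
Proof.
  intros Hd Hl Hm. unfold inv3, sum3, det3 in *.
  destruct (lt3_cases l Hl) as [ -> | [ -> | -> ] ]; destruct (lt3_cases m Hm) as [ -> | [ -> | -> ] ];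
  unfold cof3, kron; simpl; field; exact Hd.
Qed.
Lemma ddet3_jacobi M N : det3 M <> 0 ->
  ddet3 M N = det3 M * sum3 (fun p => sum3 (fun q => inv3 M q p * N p q)).
Proof.
  intros Hd. unfold ddet3, inv3. rewrite <- sum3_scal. apply sum3_ext; intros p _.
  rewrite <- sum3_scal. apply sum3_ext; intros q _. field; exact Hd.
Qed.

Definition dcof3 (M N : mat) (i j : nat) : R :=
  let i1 := ((i + 1) mod 3)%nat in let i2 := ((i + 2) mod 3)%nat in
  let j1 := ((j + 1) mod 3)%nat in let j2 := ((j + 2) mod 3)%nat in
  N i1 j1 * M i2 j2 + M i1 j1 * N i2 j2 - (N i1 j2 * M i2 j1 + M i1 j2 * N i2 j1).

Lemma is_derive_cof3 (M : R -> mat) (M' : mat) x i j :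
  (forall p q, (p < 3)%nat -> (q < 3)%nat -> is_derive (fun h => M h p q) x (M' p q)) ->
  is_derive (fun h => cof3 (M h) i j) x (dcof3 (M x) M' i j).
Proof.
  intros H. unfold cof3, dcof3.
  assert (L : forall n, (n mod 3 < 3)%nat) by (intros; apply Nat.mod_upper_bound; lia).
  apply D_minus; apply D_mult; apply H; apply L.
Qed.

Lemma dcof_sym M X Y :
  sum3 (fun p => sum3 (fun r => dcof3 M X p r * Y p r)) = sum3 (fun p => sum3 (fun r => dcof3 M Y p r * X p r)).
Proof. unfold sum3, dcof3; simpl; ring. Qed.

Lemma Derive_transl (F : R -> R) u : Derive (fun h => F (u + h)) 0 = Derive F u.
Proof.
  unfold Derive. f_equal. apply Lim_ext. intros h.
  rewrite Rplus_0_l, Rplus_0_r. reflexivity.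
Qed.

Lemma is_derive_transl (F : R -> R) u l :
  is_derive F u l <-> is_derive (fun h => F (u + h)) 0 l.
Proof.
  split; intros H.
  - assert (Hg : is_derive (fun h => u + h) 0 1).
    { eapply D_chg; [apply D_plus; [apply D_const|apply D_id] | ring]. }
    assert (H2 := is_derive_comp F (fun h => u + h) 0 l 1).
    rewrite Rplus_0_r in H2. specialize (H2 H Hg).
    eapply D_chg; [exact H2|]. simpl. change (1 * l = l). ring.
  - assert (H2 : is_derive (fun t => (fun h => F (u + h)) (t - u)) u (1 * l)).
    { assert (Hg : is_derive (fun t => t - u) u 1).
      { eapply D_chg; [apply D_minus; [apply D_id|apply D_const] | ring]. }
      assert (H3 := is_derive_comp (fun h => F (u + h)) (fun t => t - u) u l 1).
      cbv beta in H3. replace (u - u) with 0 in H3 by ring. exact (H3 H Hg). }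
    eapply is_derive_ext; [ | eapply D_chg; [ exact H2 | ring ] ].
    intros t; simpl; f_equal; ring.
Qed.

Lemma ex_derive_transl (F : R -> R) u :
  ex_derive F u <-> ex_derive (fun h => F (u + h)) 0.
Proof.
  split; intros [l H]; exists l; apply (is_derive_transl F u l); auto.
Qed.

Lemma shift_shift_same y k a b : shift (shift y k a) k b = shift y k (a + b).
Proof.
  destruct y as [[y0 y1] y2]; destruct k as [|[|k]]; simpl; rewrite Rplus_assoc; reflexivity.
Qed.

Lemma shift_comm y k l a b : k <> l -> (k < 3)%nat -> (l < 3)%nat ->
  shift (shift y k a) l b = shift (shift y l b) k a.
Proof.
  intros Hkl Hk Hl. destruct y as [[y0 y1] y2].
  destruct (lt3_cases k Hk) as [ -> | [ -> | -> ] ]; destruct (lt3_cases l Hl) as [ -> | [ -> | -> ] ];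
  try lia; reflexivity.
Qed.

Lemma shift0 y k : shift y k 0 = y.
Proof. destruct y as [[y0 y1] y2]; destruct k as [|[|k]]; simpl; rewrite Rplus_0_r; reflexivity. Qed.

Lemma Derive_line (F : pt -> R) z k u :
  Derive (fun t => F (shift z k t)) u = pdy k F (shift z k u).
Proof.
  unfold pdy. rewrite <- Derive_transl. apply Derive_ext. intros h.
  rewrite shift_shift_same. reflexivity.
Qed.

Lemma ex_derive_line (F : pt -> R) z k u :
  ex_derive (fun t => F (shift z k t)) u <-> ex_derive (fun h => F (shift (shift z k u) k h)) 0.
Proof.
  rewrite ex_derive_transl. split; apply ex_derive_ext; intros h; rewrite shift_shift_same; reflexivity.
Qed.

Lemma is_derive_line (F : pt -> R) z k u l :
  is_derive (fun t => F (shift z k t)) u l <-> is_derive (fun h => F (shift (shift z k u) k h)) 0 l.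
Proof.
  rewrite is_derive_transl. split; apply is_derive_ext; intros h; rewrite shift_shift_same; reflexivity.
Qed.

Lemma coord_shift y k h m : (k < 3)%nat -> (m < 3)%nat ->
  coord (shift y k h) m = coord y m + kron k m * h.
Proof.
  intros Hk Hm. destruct y as [[y0 y1] y2].
  destruct (lt3_cases k Hk) as [ -> | [ -> | -> ] ]; destruct (lt3_cases m Hm) as [ -> | [ -> | -> ] ];
  unfold kron; simpl; ring.
Qed.

Lemma Omega_open z : inOmega z -> exists d : posreal,
  forall w, (forall m, (m < 3)%nat -> Rabs (coord w m - coord z m) < d) -> inOmega w.
Proof.
  unfold inOmega. intros Hz.
  set (c := 1 - (coord z 0 ^ 2 + coord z 1 ^ 2 + coord z 2 ^ 2)).
  assert (Hc : 0 < Rmin 1 (c / 9)).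
  { apply Rmin_pos; unfold c; lra. }
  exists (mkposreal _ Hc). simpl. intros w Hw.
  assert (H0 := Hw 0%nat ltac:(lia)); assert (H1 := Hw 1%nat ltac:(lia)); assert (H2 := Hw 2%nat ltac:(lia)).
  assert (Hm1 := Rmin_l 1 (c/9)); assert (Hm2 := Rmin_r 1 (c/9)).
  set (e := Rmin 1 (c/9)) in *.
  assert (Ha : forall a b, a ^ 2 < 1 -> Rabs (b - a) < e -> b ^ 2 < a ^ 2 + 3 * e).
  { intros a b Ha Hb. apply Rabs_def2 in Hb. destruct Hb as [Hb1 Hb2].
    assert (-1 < a < 1) by nra.
    assert (P1 : 0 < (e - (b - a)) * (1 + a)) by (apply Rmult_lt_0_compat; lra).
    assert (P2 : 0 < (e + (b - a)) * (1 - a)) by (apply Rmult_lt_0_compat; lra).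
    assert (P3 : 0 < (e - (b - a)) * (e + (b - a))) by (apply Rmult_lt_0_compat; lra).
    assert (P4 : e * e <= e * 1) by (apply Rmult_le_compat_l; lra).
    nra. }
  assert (z0 : coord z 0 ^ 2 < 1) by (unfold c in *; nra).
  assert (z1 : coord z 1 ^ 2 < 1) by (unfold c in *; nra).
  assert (z2 : coord z 2 ^ 2 < 1) by (unfold c in *; nra).
  specialize (Ha _ _ z0 H0) as A0. specialize (Ha _ _ z1 H1) as A1. specialize (Ha _ _ z2 H2) as A2.
  unfold c in *. change (coord w 0 ^ 2 + coord w 1 ^ 2 + coord w 2 ^ 2 < 1). lra.
Qed.

Lemma Rabs_kron_le k m h : Rabs (kron k m * h) <= Rabs h.
Proof. unfold kron; destruct (Nat.eqb k m); rewrite Rabs_mult; [rewrite Rabs_R1 | rewrite Rabs_R0]; 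
  pose proof (Rabs_pos h); lra. Qed.

Lemma Omega_near1 z k : (k < 3)%nat -> inOmega z -> exists d : posreal,
  forall u, Rabs u < d -> inOmega (shift z k u).
Proof.
  intros Hk Hz. destruct (Omega_open z Hz) as [d Hd]. exists d. intros u Hu.
  apply Hd. intros m Hm. rewrite coord_shift by auto.
  replace (coord z m + kron k m * u - coord z m) with (kron k m * u) by ring.
  eapply Rle_lt_trans; [apply Rabs_kron_le | exact Hu].
Qed.

Lemma Omega_near2 z k l : (k < 3)%nat -> (l < 3)%nat -> inOmega z -> exists d : posreal,
  forall u v, Rabs u < d -> Rabs v < d -> inOmega (shift (shift z k u) l v).
Proof.
  intros Hk Hl Hz. destruct (Omega_open z Hz) as [d Hd].
  assert (Hd2 : 0 < d / 2) by (destruct d; simpl; lra).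
  exists (mkposreal _ Hd2). simpl. intros u v Hu Hv.
  apply Hd. intros m Hm. rewrite !coord_shift by auto.
  replace (coord z m + kron k m * u + kron l m * v - coord z m) with (kron k m * u + kron l m * v) by ring.
  eapply Rle_lt_trans; [apply Rabs_triang|].
  pose proof (Rabs_kron_le k m u); pose proof (Rabs_kron_le l m v). lra.
Qed.
Lemma cont_unpack (F : R -> pt -> R) s z :
  continuous (fun p : R * pt => F (fst p) (snd p)) (s, z) ->
  forall eps : posreal, exists d : posreal, forall r w, Rabs (r - s) < d ->
   (forall m, (m < 3)%nat -> Rabs (coord w m - coord z m) < d) ->
   Rabs (F r w - F s z) < eps.
Proof.
  intros H eps.
  assert (H1 := H (ball (F s z) eps) (locally_ball _ _)).
  destruct H1 as [d Hd]. exists d. intros r w Hr Hw.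
  destruct z as [[z0 z1] z2]; destruct w as [[w0 w1] w2].
  assert (B := Hd (r, (w0, w1, w2))).
  simpl in B. apply B.
  repeat split; simpl.
  exact Hr. exact (Hw 0%nat ltac:(lia)). exact (Hw 1%nat ltac:(lia)). exact (Hw 2%nat ltac:(lia)).
Qed.

Definition Ub (a b : R) : R -> pt -> Prop := fun s y => a < s < b /\ inOmega y.

Lemma smooth_pd a b g d : smooth_on (Ub a b) g -> smooth_on (Ub a b) (pd d g).
Proof.
  intros H ds s y Hsy. specialize (H (ds ++ d :: nil)%list s y Hsy).
  unfold pds in *. rewrite List.fold_right_app in H. exact H.
Qed.
Lemma smooth_pds a b g ds : smooth_on (Ub a b) g -> smooth_on (Ub a b) (pds ds g).
Proof.
  intros H ds' s y Hsy. specialize (H (ds' ++ ds)%list s y Hsy).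
  unfold pds in *. rewrite List.fold_right_app in H. exact H.
Qed.
Lemma smooth_cont a b g s y : smooth_on (Ub a b) g -> Ub a b s y ->
  continuous (fun p : R * pt => g (fst p) (snd p)) (s, y).
Proof. intros H Hs. exact (proj1 (H nil s y Hs)). Qed.
Lemma smooth_ex a b g d s y : smooth_on (Ub a b) g -> Ub a b s y -> (d <= 3)%nat ->
  ex_pd d g s y.
Proof. intros H Hs Hd. exact (proj2 (H nil s y Hs) d Hd). Qed.

Lemma cont2d_gen (F : R -> pt -> R) s z (P : R -> R -> R) (Q : R -> R -> pt) x0 y0 :
  continuous (fun p : R * pt => F (fst p) (snd p)) (s, z) ->
  P x0 y0 = s -> Q x0 y0 = z ->
  (forall u v, Rabs (P u v - s) <= Rabs (u - x0) + Rabs (v - y0)) ->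
  (forall u v m, (m < 3)%nat -> Rabs (coord (Q u v) m - coord z m) <= Rabs (u - x0) + Rabs (v - y0)) ->
  continuity_2d_pt (fun u v => F (P u v) (Q u v)) x0 y0.
Proof.
  intros H HP HQ BP BQ eps. destruct (cont_unpack F s z H eps) as [d Hd].
  assert (Hd2 : 0 < d / 2) by (destruct d; simpl; lra).
  exists (mkposreal _ Hd2). simpl. intros u v Hu Hv. rewrite HP, HQ.
  apply Hd. specialize (BP u v); lra. intros m Hm. specialize (BQ u v m Hm). lra.
Qed.

Lemma cont1d_gen (F : R -> pt -> R) s z :
  continuous (fun p : R * pt => F (fst p) (snd p)) (s, z) ->
  continuous (fun r => F r z) s.
Proof.
  intros H. apply (continuous_comp (fun r => (r, z)) (fun p : R * pt => F (fst p) (snd p))).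
  2: exact H.
  intros P [e He]. exists e. intros r Hr. apply He. split; [exact Hr|].
  destruct z as [[z0 z1] z2]; repeat split; simpl; apply ball_center.
Qed.

Lemma coord_shift2 z k l u v m : (k < 3)%nat -> (l < 3)%nat -> (m < 3)%nat ->
  Rabs (coord (shift (shift z k u) l v) m - coord z m) <= Rabs u + Rabs v.
Proof.
  intros Hk Hl Hm. rewrite !coord_shift by auto.
  replace (coord z m + kron k m * u + kron l m * v - coord z m) with (kron k m * u + kron l m * v) by ring.
  eapply Rle_trans; [apply Rabs_triang|].
  pose proof (Rabs_kron_le k m u); pose proof (Rabs_kron_le l m v). lra.
Qed.
Lemma coord_shift1 z k v m : (k < 3)%nat -> (m < 3)%nat ->
  Rabs (coord (shift z k v) m - coord z m) <= Rabs v.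
Proof.
  intros Hk Hm. rewrite !coord_shift by auto.
  replace (coord z m + kron k m * v - coord z m) with (kron k m * v) by ring.
  apply Rabs_kron_le.
Qed.

Lemma near_U1 a b s z k : a < s < b -> inOmega z -> (k < 3)%nat ->
  exists d : posreal, forall u v, Rabs (u - s) < d -> Rabs (v - 0) < d -> Ub a b u (shift z k v).
Proof.
  intros Hs Hz Hk. destruct (Omega_near1 z k Hk Hz) as [d Hd].
  assert (Hm : 0 < Rmin d (Rmin (s - a) (b - s))).
  { destruct d; simpl. repeat apply Rmin_pos; lra. }
  exists (mkposreal _ Hm). simpl. intros u v Hu Hv.
  pose proof (Rmin_l d (Rmin (s - a) (b - s))). pose proof (Rmin_r d (Rmin (s - a) (b - s))).
  pose proof (Rmin_l (s - a) (b - s)). pose proof (Rmin_r (s - a) (b - s)).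
  split. apply Rabs_def2 in Hu. lra. apply Hd. rewrite Rminus_0_r in Hv. lra.
Qed.

Lemma near_U2 a b s z k l : a < s < b -> inOmega z -> (k < 3)%nat -> (l < 3)%nat ->
  exists d : posreal, forall u v, Rabs (u - 0) < d -> Rabs (v - 0) < d -> Ub a b s (shift (shift z k u) l v).
Proof.
  intros Hs Hz Hk Hl. destruct (Omega_near2 z k l Hk Hl Hz) as [d Hd].
  exists d. intros u v Hu Hv. split; [exact Hs|]. rewrite Rminus_0_r in Hu, Hv. apply Hd; auto.
Qed.


Lemma schwarz_ts a b g s z k : smooth_on (Ub a b) g -> a < s < b -> inOmega z -> (k < 3)%nat ->
  Derive (fun r => pdy k (g r) z) s = pdy k (fun w => Derive (fun r => g r w) s) z.
Proof.
  intros Hg Hs Hz Hk.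
  assert (Hg1 := smooth_pd a b g 0%nat Hg). assert (Hg2 := smooth_pd a b g (S k) Hg).
  assert (Hz0 : Ub a b s z) by (split; auto).
  set (f := fun u v => g u (shift z k v)).
  assert (H1 : locally_2d (fun u v : R =>
          ex_derive (fun z : R => f z v) u /\
          ex_derive (fun z : R => f u z) v /\
          ex_derive (fun z : R => Derive (fun t : R => f z t) v) u /\
          ex_derive (fun z : R => Derive (fun t : R => f t z) u) v) s 0).
  { destruct (near_U1 a b s z k Hs Hz Hk) as [d Hd]. exists d. intros u v Hu Hv.
    assert (HU := Hd u v Hu Hv). unfold f.
    split; [|split; [|split]].
    + exact (smooth_ex a b g 0 u _ Hg HU ltac:(lia)).
    + apply ex_derive_line. exact (smooth_ex a b g (S k) u _ Hg HU ltac:(lia)).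
    + eapply ex_derive_ext. intros w. symmetry. apply (Derive_line (g w)).
      exact (smooth_ex a b (pd (S k) g) 0 u _ Hg2 HU ltac:(lia)).
    + apply (ex_derive_line (fun w => Derive (fun t => g t w) u)).
      exact (smooth_ex a b (pd 0 g) (S k) u _ Hg1 HU ltac:(lia)). }
  assert (H2 : continuity_2d_pt
         (fun u v : R => Derive (fun z : R => Derive (fun t : R => f z t) v) u) s 0).
  { apply continuity_2d_pt_ext with (f := fun u v => pd 0 (pd (S k) g) u (shift z k v)).
    { intros u v. simpl. apply Derive_ext. intros w. symmetry. apply (Derive_line (g w)). }
    apply (cont2d_gen (pd 0 (pd (S k) g)) s z (fun u v => u) (fun u v => shift z k v)).
    + exact (smooth_cont a b _ s z (smooth_pd a b _ 0 Hg2) Hz0).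
    + reflexivity.
    + apply shift0.
    + intros u v. pose proof (Rabs_pos (v - 0)). lra.
    + intros u v m Hm. rewrite Rminus_0_r. pose proof (Rabs_pos (u - s)). pose proof (coord_shift1 z k v m Hk Hm). lra. }
  assert (H3 : continuity_2d_pt
         (fun u v : R => Derive (fun z : R => Derive (fun t : R => f t z) u) v) s 0).
  { apply continuity_2d_pt_ext with (f := fun u v => pd (S k) (pd 0 g) u (shift z k v)).
    { intros u v. simpl. symmetry. apply (Derive_line (fun w => Derive (fun t => g t w) u)). }
    apply (cont2d_gen (pd (S k) (pd 0 g)) s z (fun u v => u) (fun u v => shift z k v)).
    + exact (smooth_cont a b _ s z (smooth_pd a b _ (S k) Hg1) Hz0).
    + reflexivity.
    + apply shift0.
    + intros u v. pose proof (Rabs_pos (v - 0)). lra.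
    + intros u v m Hm. rewrite Rminus_0_r. pose proof (Rabs_pos (u - s)). pose proof (coord_shift1 z k v m Hk Hm). lra. }
  exact (Schwarz f s 0 H1 H2 H3).
Qed.

Lemma schwarz_ss a b g s z k l : smooth_on (Ub a b) g -> a < s < b -> inOmega z ->
  (k < 3)%nat -> (l < 3)%nat ->
  pdy k (fun w => pdy l (g s) w) z = pdy l (fun w => pdy k (g s) w) z.
Proof.
  intros Hg Hs Hz Hk Hl.
  destruct (Nat.eq_dec k l) as [<-|Hkl]; [reflexivity|].
  assert (Hgk := smooth_pd a b g (S k) Hg). assert (Hgl := smooth_pd a b g (S l) Hg).
  assert (Hz0 : Ub a b s z) by (split; auto).
  set (f := fun u v => g s (shift (shift z k u) l v)).
  assert (H1 : locally_2d (fun u v : R =>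
          ex_derive (fun z : R => f z v) u /\
          ex_derive (fun z : R => f u z) v /\
          ex_derive (fun z : R => Derive (fun t : R => f z t) v) u /\
          ex_derive (fun z : R => Derive (fun t : R => f t z) u) v) 0 0).
  { destruct (near_U2 a b s z k l Hs Hz Hk Hl) as [d Hd]. exists d. intros u v Hu Hv.
    assert (HU := Hd u v Hu Hv).
    assert (HU' : Ub a b s (shift (shift z l v) k u)) by (rewrite <- shift_comm; auto).
    unfold f.
    split; [|split; [|split]].
    + eapply ex_derive_ext. intros w. rewrite shift_comm by auto. reflexivity.
      apply (ex_derive_line (g s)). exact (smooth_ex a b g (S k) s _ Hg HU' ltac:(lia)).
    + apply (ex_derive_line (g s)). exact (smooth_ex a b g (S l) s _ Hg HU ltac:(lia)).
    + eapply ex_derive_ext. intros w. symmetry. rewrite (Derive_line (g s)).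
      rewrite shift_comm by auto. reflexivity.
      apply (ex_derive_line (pdy l (g s))). exact (smooth_ex a b (pd (S l) g) (S k) s _ Hgl HU' ltac:(lia)).
    + eapply ex_derive_ext. intros w. symmetry.
      transitivity (Derive (fun t => g s (shift (shift z l w) k t)) u).
      { apply Derive_ext; intros t. rewrite shift_comm by auto. reflexivity. }
      rewrite (Derive_line (g s)). rewrite shift_comm by auto. reflexivity.
      apply (ex_derive_line (pdy k (g s))). exact (smooth_ex a b (pd (S k) g) (S l) s _ Hgk HU ltac:(lia)). }
  assert (H2 : continuity_2d_pt
         (fun u v : R => Derive (fun z : R => Derive (fun t : R => f z t) v) u) 0 0).
  { apply continuity_2d_pt_ext with (f := fun u v => pd (S k) (pd (S l) g) s (shift (shift z l v) k u)).
    { intros u v. unfold f. simpl. rewrite <- (Derive_line (pdy l (g s))). apply Derive_ext. intros w.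
      rewrite (Derive_line (g s)). rewrite shift_comm by auto. reflexivity. }
    apply (cont2d_gen (pd (S k) (pd (S l) g)) s z (fun u v => s) (fun u v => shift (shift z l v) k u)).
    + exact (smooth_cont a b _ s z (smooth_pd a b _ (S k) Hgl) Hz0).
    + reflexivity.
    + rewrite !shift0; reflexivity.
    + intros u v. rewrite Rminus_diag, Rabs_R0. pose proof (Rabs_pos (v - 0)). pose proof (Rabs_pos (u - 0)). lra.
    + intros u v m Hm. rewrite !Rminus_0_r. pose proof (coord_shift2 z l k v u m Hl Hk Hm). lra. }
  assert (H3 : continuity_2d_pt
         (fun u v : R => Derive (fun z : R => Derive (fun t : R => f t z) u) v) 0 0).
  { apply continuity_2d_pt_ext with (f := fun u v => pd (S l) (pd (S k) g) s (shift (shift z k u) l v)).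
    { intros u v. unfold f. simpl. rewrite <- (Derive_line (pdy k (g s))). apply Derive_ext. intros w.
      transitivity (Derive (fun t => g s (shift (shift z l w) k t)) u).
      2:{ apply Derive_ext; intros t. rewrite shift_comm by auto. reflexivity. }
      rewrite (Derive_line (g s)). rewrite shift_comm by auto. reflexivity. }
    apply (cont2d_gen (pd (S l) (pd (S k) g)) s z (fun u v => s) (fun u v => shift (shift z k u) l v)).
    + exact (smooth_cont a b _ s z (smooth_pd a b _ (S l) Hgk) Hz0).
    + reflexivity.
    + rewrite !shift0; reflexivity.
    + intros u v. rewrite Rminus_diag, Rabs_R0. pose proof (Rabs_pos (v - 0)). pose proof (Rabs_pos (u - 0)). lra.
    + intros u v m Hm. rewrite !Rminus_0_r. pose proof (coord_shift2 z k l u v m Hk Hl Hm). lra. }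
  assert (HS := Schwarz f 0 0 H1 H2 H3).
  change (Derive (fun u => Derive (fun t => f u t) 0) 0 = pdy l (fun w => pdy k (g s) w) z).
  rewrite HS. unfold pdy. apply Derive_ext. intros v. apply Derive_ext. intros t. unfold f.
  rewrite shift_comm by auto. reflexivity.
Qed.

Lemma C0_plus (f g : R -> R) x : continuous f x -> continuous g x -> continuous (fun t => f t + g t) x.
Proof. intros H1 H2; exact (continuous_plus f g x H1 H2). Qed.
Lemma C0_minus (f g : R -> R) x : continuous f x -> continuous g x -> continuous (fun t => f t - g t) x.
Proof. intros H1 H2; exact (continuous_minus f g x H1 H2). Qed.
Lemma C0_mult (f g : R -> R) x : continuous f x -> continuous g x -> continuous (fun t => f t * g t) x.
Proof. intros H1 H2; exact (continuous_mult f g x H1 H2). Qed.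
Lemma C0_opp (f : R -> R) x : continuous f x -> continuous (fun t => - f t) x.
Proof. intros H1; exact (continuous_opp f x H1). Qed.
Lemma C0_const (c : R) x : continuous (fun _ : R => c) x.
Proof. exact (continuous_const c x). Qed.
Lemma C0_id x : continuous (fun t : R => t) x.
Proof. exact (continuous_id x). Qed.
Lemma C0_inv (f : R -> R) x : continuous f x -> f x <> 0 -> continuous (fun t => / f t) x.
Proof.
  intros H1 H2. apply (continuous_comp f (fun t => / t)). exact H1.
  apply continuity_pt_filterlim. apply continuity_pt_inv. apply continuity_pt_id. exact H2.
Qed.
Lemma C0_div (f g : R -> R) x : continuous f x -> continuous g x -> g x <> 0 -> continuous (fun t => f t / g t) x.
Proof. intros; apply C0_mult; auto; apply C0_inv; auto. Qed.
Lemma C0_sum3 (F : R -> nat -> R) x : (forall k, (k < 3)%nat -> continuous (fun t => F t k) x) ->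
  continuous (fun t => sum3 (F t)) x.
Proof. intros H; unfold sum3; repeat apply C0_plus; apply H; lia. Qed.
Lemma C0_ext (f g : R -> R) x : (forall t, f t = g t) -> continuous f x -> continuous g x.
Proof. intros H H1. eapply continuous_ext; eauto. Qed.
Lemma C0_ext_loc (f g : R -> R) x : locally x (fun t => f t = g t) -> continuous f x -> continuous g x.
Proof. intros H H1. eapply continuous_ext_loc; [|exact H1]. eapply filter_imp; [|exact H]. intros; auto. Qed.
Lemma C0_comp (f g : R -> R) x : continuous g x -> continuous f (g x) -> continuous (fun t => f (g t)) x.
Proof. intros H1 H2; exact (continuous_comp g f x H1 H2). Qed.
Lemma ex_derive_C0 (f : R -> R) x : ex_derive f x -> continuous f x.
Proof. intros H; exact (ex_derive_continuous f x H). Qed.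

Lemma EX_plus (f g : R -> R) x : ex_derive f x -> ex_derive g x -> ex_derive (fun t => f t + g t) x.
Proof. intros [a Ha] [b Hb]; exists (a + b); apply D_plus; auto. Qed.
Lemma EX_minus (f g : R -> R) x : ex_derive f x -> ex_derive g x -> ex_derive (fun t => f t - g t) x.
Proof. intros [a Ha] [b Hb]; exists (a - b); apply D_minus; auto. Qed.
Lemma EX_mult (f g : R -> R) x : ex_derive f x -> ex_derive g x -> ex_derive (fun t => f t * g t) x.
Proof. intros [a Ha] [b Hb]; eexists; apply D_mult; eauto. Qed.
Lemma EX_inv (f : R -> R) x : ex_derive f x -> f x <> 0 -> ex_derive (fun t => / f t) x.
Proof. intros [a Ha] H; eexists; apply D_inv; eauto. Qed.
Lemma EX_comp (f g : R -> R) x : ex_derive g x -> ex_derive f (g x) -> ex_derive (fun t => f (g t)) x.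
Proof. intros [a Ha] [b Hb]; eexists; exact (is_derive_comp f g x b a Hb Ha). Qed.
Lemma Derive_mult' (f g : R -> R) x : ex_derive f x -> ex_derive g x ->
  Derive (fun t => f t * g t) x = Derive f x * g x + f x * Derive g x.
Proof. intros H1 H2. apply is_derive_unique. apply D_mult; apply Derive_correct; auto. Qed.
Lemma Derive_plus' (f g : R -> R) x : ex_derive f x -> ex_derive g x ->
  Derive (fun t => f t + g t) x = Derive f x + Derive g x.
Proof. intros H1 H2. apply is_derive_unique. apply D_plus; apply Derive_correct; auto. Qed.
Lemma Derive_minus' (f g : R -> R) x : ex_derive f x -> ex_derive g x ->
  Derive (fun t => f t - g t) x = Derive f x - Derive g x.
Proof. intros H1 H2. apply is_derive_unique. apply D_minus; apply Derive_correct; auto. Qed.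
Lemma Derive_inv' (f : R -> R) x : ex_derive f x -> f x <> 0 ->
  Derive (fun t => / f t) x = - Derive f x / (f x * f x).
Proof. intros H1 H2. apply is_derive_unique. apply D_inv; auto; apply Derive_correct; auto. Qed.
Lemma Derive_comp' (f g : R -> R) x : ex_derive g x -> ex_derive f (g x) ->
  Derive (fun t => f (g t)) x = Derive f (g x) * Derive g x.
Proof. intros H1 H2. apply is_derive_unique.
  eapply D_chg. exact (is_derive_comp f g x _ _ (Derive_correct _ _ H2) (Derive_correct _ _ H1)).
  simpl. change (Derive g x * Derive f (g x) = Derive f (g x) * Derive g x). ring. Qed.

Definition C1f (f : R -> R) (x : R) : Prop :=
  locally x (fun t => ex_derive f t) /\ continuous (Derive f) x.

Lemma C1_ex f x : C1f f x -> ex_derive f x.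
Proof. intros [H _]. exact (locally_singleton _ _ H). Qed.
Lemma C1_C0 f x : C1f f x -> continuous f x.
Proof. intros H. apply ex_derive_C0, C1_ex, H. Qed.
Lemma C1_is f x : C1f f x -> is_derive f x (Derive f x).
Proof. intros H. apply Derive_correct, C1_ex, H. Qed.

Lemma C1_plus f g x : C1f f x -> C1f g x -> C1f (fun t => f t + g t) x.
Proof.
  intros [H1 H2] [H3 H4]. split.
  - eapply filter_imp; [|exact (filter_and _ _ H1 H3)]. intros t [A B]. apply EX_plus; auto.
  - apply C0_ext_loc with (fun t => Derive f t + Derive g t).
    + eapply filter_imp; [|exact (filter_and _ _ H1 H3)]. intros t [A B]. symmetry. apply Derive_plus'; auto.
    + apply C0_plus; auto.
Qed.

Lemma C1_of (f f' : R -> R) x : locally x (fun t => is_derive f t (f' t)) -> continuous f' x -> C1f f x.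
Proof.
  intros H1 H2. split.
  - eapply filter_imp; [|exact H1]. intros t Ht. exists (f' t); exact Ht.
  - apply C0_ext_loc with f'; auto. eapply filter_imp; [|exact H1]. intros t Ht. symmetry. apply is_derive_unique; auto.
Qed.

Lemma C1_minus f g x : C1f f x -> C1f g x -> C1f (fun t => f t - g t) x.
Proof.
  intros [H1 H2] [H3 H4]. split.
  - eapply filter_imp; [|exact (filter_and _ _ H1 H3)]. intros t [A B]. apply EX_minus; auto.
  - apply C0_ext_loc with (fun t => Derive f t - Derive g t).
    + eapply filter_imp; [|exact (filter_and _ _ H1 H3)]. intros t [A B]. symmetry. apply Derive_minus'; auto.
    + apply C0_minus; auto.
Qed.

Lemma C1_mult f g x : C1f f x -> C1f g x -> C1f (fun t => f t * g t) x.
Proof.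
  intros Hf Hg. pose proof (C1_C0 f x Hf). pose proof (C1_C0 g x Hg).
  destruct Hf as [H1 H2], Hg as [H3 H4]. split.
  - eapply filter_imp; [|exact (filter_and _ _ H1 H3)]. intros t [A B]. apply EX_mult; auto.
  - apply C0_ext_loc with (fun t => Derive f t * g t + f t * Derive g t).
    + eapply filter_imp; [|exact (filter_and _ _ H1 H3)]. intros t [A B]. symmetry. apply Derive_mult'; auto.
    + apply C0_plus; apply C0_mult; auto.
Qed.

Lemma C1_const c x : C1f (fun _ => c) x.
Proof. apply C1_of with (fun _ => 0). apply filter_forall. intros; apply D_const. apply C0_const. Qed.
Lemma C1_id x : C1f (fun t => t) x.
Proof. apply C1_of with (fun _ => 1). apply filter_forall. intros; apply D_id. apply C0_const. Qed.

Lemma C1_comp f g x : C1f g x -> C1f f (g x) -> C1f (fun t => f (g t)) x.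
Proof.
  intros Hg Hf. pose proof (C1_C0 g x Hg) as Cg.
  destruct Hg as [H1 H2], Hf as [H3 H4].
  assert (L : locally x (fun t => ex_derive f (g t))).
  { apply Cg. exact H3. }
  split.
  - eapply filter_imp; [|exact (filter_and _ _ H1 L)]. intros t [A B]. apply EX_comp; auto.
  - apply C0_ext_loc with (fun t => Derive f (g t) * Derive g t).
    + eapply filter_imp; [|exact (filter_and _ _ H1 L)]. intros t [A B]. symmetry. apply Derive_comp'; auto.
    + apply C0_mult; auto. apply C0_comp; auto.
Qed.

Lemma loc_ball (f : R -> R) x (e : posreal) : continuous f x ->
  locally x (fun t => Rabs (f t - f x) < e).
Proof. intros H. assert (B := H _ (locally_ball (f x) e)). eapply filter_imp; [|exact B]. intros t Ht; exact Ht. Qed.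

Lemma loc_pos (f : R -> R) x : continuous f x -> 0 < f x -> locally x (fun t => 0 < f t).
Proof.
  intros H Hp. assert (L := loc_ball f x (mkposreal _ Hp) H).
  eapply filter_imp; [|exact L]. simpl. intros t Ht. apply Rabs_def2 in Ht. lra.
Qed.
Lemma loc_neq (f : R -> R) x : continuous f x -> f x <> 0 -> locally x (fun t => f t <> 0).
Proof.
  intros H Hp. assert (Hp' : 0 < Rabs (f x)) by (apply Rabs_pos_lt; auto).
  assert (L := loc_ball f x (mkposreal _ Hp') H).
  eapply filter_imp; [|exact L]. simpl. intros t Ht Hz. rewrite Hz in Ht.
  rewrite Rminus_0_l, Rabs_Ropp in Ht. lra.
Qed.

Lemma C1_inv_fun x : x <> 0 -> C1f (fun t => / t) x.
Proof.
  intros Hx. apply C1_of with (fun t => - 1 / (t * t)).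
  - assert (L : locally x (fun t => t <> 0)).
    { apply (loc_neq (fun t => t) x). apply C0_id. exact Hx. }
    eapply filter_imp; [|exact L]. intros t Ht. eapply D_chg; [apply D_inv; [apply D_id | exact Ht] | cbv beta; field; exact Ht].
  - apply C0_div. apply C0_const. apply C0_mult; apply C0_id. apply Rmult_integral_contrapositive; auto.
Qed.

Lemma C1_inv f x : C1f f x -> f x <> 0 -> C1f (fun t => / f t) x.
Proof. intros H1 H2. apply (C1_comp (fun t => / t) f x H1). apply C1_inv_fun; auto. Qed.
Lemma C1_div f g x : C1f f x -> C1f g x -> g x <> 0 -> C1f (fun t => f t / g t) x.
Proof. intros H1 H2 H3. apply C1_mult; auto. apply C1_inv; auto. Qed.
Lemma C1_sum3 (F : R -> nat -> R) x : (forall k, (k < 3)%nat -> C1f (fun t => F t k) x) ->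
  C1f (fun t => sum3 (F t)) x.
Proof. intros H; unfold sum3. apply C1_plus; [apply C1_plus|]; apply H; lia. Qed.
Lemma C1_ext f g x : (forall t, f t = g t) -> C1f f x -> C1f g x.
Proof.
  intros E [H1 H2]. split.
  - eapply filter_imp; [|exact H1]. intros t Ht. eapply ex_derive_ext; eauto.
  - apply C0_ext with (Derive f); auto. intros t. apply Derive_ext; auto.
Qed.

Lemma is_derive_Rpower_fun c t : 0 < t -> is_derive (fun u => Rpower u c) t (c * Rpower t (c - 1)).
Proof. intros H. apply is_derive_Reals. apply derivable_pt_lim_power; auto. Qed.

Lemma C1_Rpower_fun c x : 0 < x -> C1f (fun t => Rpower t c) x.
Proof.
  intros Hx. apply C1_of with (fun t => c * Rpower t (c - 1)).
  - eapply filter_imp; [|exact (loc_pos (fun t => t) x (C0_id x) Hx)]. intros t Ht.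
    apply is_derive_Rpower_fun; auto.
  - apply C0_mult. apply C0_const. apply ex_derive_C0. eexists. apply is_derive_Rpower_fun; auto.
Qed.
Lemma C1_Rpower f c x : C1f f x -> 0 < f x -> C1f (fun t => Rpower (f t) c) x.
Proof. intros H1 H2. apply (C1_comp (fun t => Rpower t c) f x H1). apply C1_Rpower_fun; auto. Qed.

Ltac c1poly := repeat first [ assumption | simple apply C1_const | simple apply C1_plus | simple apply C1_minus | simple apply C1_mult ].

Lemma C1_det3 (M : R -> mat) x : (forall p q, (p < 3)%nat -> (q < 3)%nat -> C1f (fun r => M r p q) x) ->
  C1f (fun r => det3 (M r)) x.
Proof.
  intros H.
  assert (H00 := H 0%nat 0%nat ltac:(lia) ltac:(lia)).
  assert (H01 := H 0%nat 1%nat ltac:(lia) ltac:(lia)).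
  assert (H02 := H 0%nat 2%nat ltac:(lia) ltac:(lia)).
  assert (H10 := H 1%nat 0%nat ltac:(lia) ltac:(lia)).
  assert (H11 := H 1%nat 1%nat ltac:(lia) ltac:(lia)).
  assert (H12 := H 1%nat 2%nat ltac:(lia) ltac:(lia)).
  assert (H20 := H 2%nat 0%nat ltac:(lia) ltac:(lia)).
  assert (H21 := H 2%nat 1%nat ltac:(lia) ltac:(lia)).
  assert (H22 := H 2%nat 2%nat ltac:(lia) ltac:(lia)).
  unfold det3. c1poly.
Qed.

Lemma C1_inv3 (M : R -> mat) x k l : (forall p q, (p < 3)%nat -> (q < 3)%nat -> C1f (fun r => M r p q) x) ->
  det3 (M x) <> 0 -> (k < 3)%nat -> (l < 3)%nat -> C1f (fun r => inv3 (M r) k l) x.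
Proof.
  intros H Hd Hk Hl. assert (HD := C1_det3 M x H).
  assert (H00 := H 0%nat 0%nat ltac:(lia) ltac:(lia)).
  assert (H01 := H 0%nat 1%nat ltac:(lia) ltac:(lia)).
  assert (H02 := H 0%nat 2%nat ltac:(lia) ltac:(lia)).
  assert (H10 := H 1%nat 0%nat ltac:(lia) ltac:(lia)).
  assert (H11 := H 1%nat 1%nat ltac:(lia) ltac:(lia)).
  assert (H12 := H 1%nat 2%nat ltac:(lia) ltac:(lia)).
  assert (H20 := H 2%nat 0%nat ltac:(lia) ltac:(lia)).
  assert (H21 := H 2%nat 1%nat ltac:(lia) ltac:(lia)).
  assert (H22 := H 2%nat 2%nat ltac:(lia) ltac:(lia)).
  unfold inv3. apply C1_div; auto.
  destruct (lt3_cases k Hk) as [ -> | [ -> | -> ] ]; destruct (lt3_cases l Hl) as [ -> | [ -> | -> ] ];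
  unfold cof3; simpl; c1poly.
Qed.

Lemma C0_det3 (M : R -> mat) x : (forall p q, (p < 3)%nat -> (q < 3)%nat -> continuous (fun r => M r p q) x) ->
  continuous (fun r => det3 (M r)) x.
Proof.
  intros H.
  assert (H00 := H 0%nat 0%nat ltac:(lia) ltac:(lia)).
  assert (H01 := H 0%nat 1%nat ltac:(lia) ltac:(lia)).
  assert (H02 := H 0%nat 2%nat ltac:(lia) ltac:(lia)).
  assert (H10 := H 1%nat 0%nat ltac:(lia) ltac:(lia)).
  assert (H11 := H 1%nat 1%nat ltac:(lia) ltac:(lia)).
  assert (H12 := H 1%nat 2%nat ltac:(lia) ltac:(lia)).
  assert (H20 := H 2%nat 0%nat ltac:(lia) ltac:(lia)).
  assert (H21 := H 2%nat 1%nat ltac:(lia) ltac:(lia)).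
  assert (H22 := H 2%nat 2%nat ltac:(lia) ltac:(lia)).
  unfold det3. repeat first [ assumption | simple apply C0_const | simple apply C0_plus | simple apply C0_minus | simple apply C0_mult ].
Qed.
Lemma C0_inv3 (M : R -> mat) x k l : (forall p q, (p < 3)%nat -> (q < 3)%nat -> continuous (fun r => M r p q) x) ->
  det3 (M x) <> 0 -> (k < 3)%nat -> (l < 3)%nat -> continuous (fun r => inv3 (M r) k l) x.
Proof.
  intros H Hd Hk Hl. assert (HD := C0_det3 M x H).
  assert (H00 := H 0%nat 0%nat ltac:(lia) ltac:(lia)).
  assert (H01 := H 0%nat 1%nat ltac:(lia) ltac:(lia)).
  assert (H02 := H 0%nat 2%nat ltac:(lia) ltac:(lia)).
  assert (H10 := H 1%nat 0%nat ltac:(lia) ltac:(lia)).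
  assert (H11 := H 1%nat 1%nat ltac:(lia) ltac:(lia)).
  assert (H12 := H 1%nat 2%nat ltac:(lia) ltac:(lia)).
  assert (H20 := H 2%nat 0%nat ltac:(lia) ltac:(lia)).
  assert (H21 := H 2%nat 1%nat ltac:(lia) ltac:(lia)).
  assert (H22 := H 2%nat 2%nat ltac:(lia) ltac:(lia)).
  unfold inv3. apply C0_div; auto.
  destruct (lt3_cases k Hk) as [ -> | [ -> | -> ] ]; destruct (lt3_cases l Hl) as [ -> | [ -> | -> ] ];
  unfold cof3; simpl; repeat first [ assumption | simple apply C0_const | simple apply C0_plus | simple apply C0_minus | simple apply C0_mult ].
Qed.

Lemma incr_of_deriv (f df : R -> R) c0 :
  (forall t, c0 < t -> is_derive f t (df t)) -> (forall t, c0 < t -> 0 < df t) ->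
  forall t1 t2, c0 < t1 -> t1 < t2 -> f t1 < f t2.
Proof.
  intros Hd Hp t1 t2 H1 H2.
  destruct (MVT_cor2 f df t1 t2 H2) as [c [Hc1 Hc2]].
  { intros c Hc. apply is_derive_Reals. apply Hd. lra. }
  assert (0 < df c) by (apply Hp; lra).
  assert (0 < df c * (t2 - t1)) by (apply Rmult_lt_0_compat; lra). lra.
Qed.

Lemma inverse_deriv (f df g : R -> R) c0 a b :
  (forall t, c0 < t -> is_derive f t (df t)) -> (forall t, c0 < t -> 0 < df t) ->
  (forall s, a < s < b -> c0 < g s /\ f (g s) = s) ->
  forall s, a < s < b -> continuity_pt g s /\ is_derive g s (/ df (g s)).
Proof.
  intros Hd Hp Hg s Hs.
  assert (Finc := incr_of_deriv f df c0 Hd Hp).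
  set (lb := (a + s) / 2). set (ub := (s + b) / 2).
  assert (Hlb : a < lb < s) by (unfold lb; lra). assert (Hub : s < ub < b) by (unfold ub; lra).
  assert (Gmono : forall x y, lb <= x <= ub -> lb <= y <= ub -> x < y -> g x < g y).
  { intros x y Hx Hy Hxy. destruct (Hg x ltac:(lra)) as [Ax Bx]. destruct (Hg y ltac:(lra)) as [Ay By].
    destruct (Rlt_or_le (g x) (g y)) as [H|H]; auto.
    destruct (Rle_lt_or_eq_dec _ _ H) as [H'|H'].
    - assert (f (g y) < f (g x)) by (apply Finc; auto). lra.
    - rewrite H' in By. lra. }
  assert (Gle : forall x y, lb <= x <= ub -> lb <= y <= ub -> x <= y -> g x <= g y).
  { intros x y Hx Hy Hxy. destruct (Rle_lt_or_eq_dec _ _ Hxy) as [H|H].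
    left; apply Gmono; auto. subst; lra. }
  destruct (Hg lb ltac:(lra)) as [Alb Blb]. destruct (Hg ub ltac:(lra)) as [Aub Bub].
  assert (Hglu : g lb < g ub) by (apply Gmono; lra).
  assert (Cont : continuity_pt g s).
  { apply (continuity_pt_recip_interv f g (g lb) (g ub) Hglu).
    - intros x y Hx Hxy Hy. apply Finc; lra.
    - intros x Hx1 Hx2. rewrite Blb in Hx1. rewrite Bub in Hx2. unfold comp, id. apply Hg; lra.
    - intros x Hx1 Hx2. rewrite Blb in Hx1. rewrite Bub in Hx2. split; apply Gle; lra.
    - intros t Ht. apply derivable_continuous_pt. exists (df t). apply is_derive_Reals. apply Hd. lra.
    - rewrite Blb, Bub. lra. }
  split; [exact Cont|].
  assert (Prf : forall t, g lb <= t <= g ub -> derivable_pt f t).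
  { intros t Ht. exists (df t). apply is_derive_Reals. apply Hd. lra. }
  assert (Prg_incr : g lb <= g s <= g ub) by (split; apply Gle; lra).
  assert (HD := derivable_pt_lim_recip_interv f g lb ub s Prf Cont ltac:(lra) ltac:(lra) Prg_incr).
  assert (E : derive_pt f (g s) (Prf (g s) Prg_incr) = df (g s)).
  { apply derive_pt_eq_0. apply is_derive_Reals. apply Hd. lra. }
  rewrite E in HD.
  assert (Hdf : 0 < df (g s)) by (apply Hp; lra).
  apply is_derive_Reals. replace (/ df (g s)) with (1 / df (g s)) by (field; lra).
  apply HD.
  - intros x Hx. unfold comp, id. apply Hg. lra.
  - lra.
Qed.

Lemma loc_interval a b s : a < s < b -> locally s (fun r => a < r < b).
Proof.
  intros Hs. assert (Hm : 0 < Rmin (s - a) (b - s)) by (apply Rmin_pos; lra).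
  exists (mkposreal _ Hm). intros r Hr. change (Rabs (r - s) < Rmin (s - a) (b - s)) in Hr.
  apply Rabs_def2 in Hr. pose proof (Rmin_l (s - a) (b - s)). pose proof (Rmin_r (s - a) (b - s)). lra.
Qed.

Definition AHyp (A dA : R -> mat) (eps0 : R) : Prop :=
  (forall t, - eps0 < t -> 0 < det3 (A t)) /\
  (forall t i j, - eps0 < t -> (i < 3)%nat -> (j < 3)%nat -> is_derive (fun r => A r i j) t (dA t i j)) /\
  (forall t i j, - eps0 < t -> (i < 3)%nat -> (j < 3)%nat -> ex_derive (fun r => dA r i j) t).

Lemma C1_A A dA eps0 t i j : AHyp A dA eps0 -> - eps0 < t -> (i < 3)%nat -> (j < 3)%nat ->
  C1f (fun r => A r i j) t.
Proof.
  intros [H1 [H2 H3]] Ht Hi Hj. apply (C1_of _ (fun r => dA r i j)).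
  - assert (L := loc_interval (- eps0) (t + 1) t ltac:(lra)).
    eapply filter_imp; [|exact L]. intros r Hr. apply H2; auto; lra.
  - apply ex_derive_C0. apply H3; auto.
Qed.

Lemma C1_detA A dA eps0 t : AHyp A dA eps0 -> - eps0 < t -> C1f (fun r => det3 (A r)) t.
Proof. intros H Ht. apply C1_det3. intros p q Hp Hq. apply (C1_A A dA eps0); auto. Qed.

Lemma C1_mudA A dA eps0 t c : AHyp A dA eps0 -> - eps0 < t -> C1f (fun r => Rpower (det3 (A r)) c) t.
Proof. intros H Ht. apply C1_Rpower. apply (C1_detA A dA eps0); auto. apply (proj1 H); auto. Qed.

Definition THyp (A : R -> mat) (eps0 : R) (tau tt : R -> R) (T eps : R) : Prop :=
  (forall t, - eps0 < t -> is_derive tau t (/ Rpower (det3 (A t)) (1/3))) /\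
  (forall s, - eps < s < T + eps -> - eps0 < tt s /\ tau (tt s) = s).

Lemma tt_props A dA eps0 tau tt T eps s : AHyp A dA eps0 -> THyp A eps0 tau tt T eps ->
  - eps < s < T + eps ->
  continuous tt s /\ is_derive tt s (Rpower (det3 (A (tt s))) (1/3)).
Proof.
  intros HA [Htau Htt] Hs.
  assert (Hpos : forall t, - eps0 < t -> 0 < (fun t => / Rpower (det3 (A t)) (1/3)) t).
  { intros t Ht. apply Rinv_0_lt_compat. apply exp_pos. }
  destruct (inverse_deriv tau (fun t => / Rpower (det3 (A t)) (1/3)) tt (- eps0) (- eps) (T + eps)
              Htau Hpos Htt s Hs) as [C D].
  split. apply continuity_pt_filterlim; exact C.
  rewrite Rinv_inv in D. exact D.
Qed.

Lemma C1_tt A dA eps0 tau tt T eps s : AHyp A dA eps0 -> THyp A eps0 tau tt T eps ->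
  - eps < s < T + eps -> C1f tt s.
Proof.
  intros HA HT Hs. apply (C1_of _ (fun r => Rpower (det3 (A (tt r))) (1/3))).
  - eapply filter_imp; [|exact (loc_interval _ _ s Hs)]. intros r Hr.
    exact (proj2 (tt_props A dA eps0 tau tt T eps r HA HT Hr)).
  - apply (C0_comp (fun t => Rpower (det3 (A t)) (1/3)) tt).
    exact (proj1 (tt_props A dA eps0 tau tt T eps s HA HT Hs)).
    apply C1_C0. apply (C1_mudA A dA eps0). auto. apply (proj2 HT s Hs).
Qed.

Lemma C1_Att A dA eps0 tau tt T eps s i j : AHyp A dA eps0 -> THyp A eps0 tau tt T eps ->
  - eps < s < T + eps -> (i < 3)%nat -> (j < 3)%nat -> C1f (fun r => A (tt r) i j) s.
Proof.
  intros HA HT Hs Hi Hj. apply (C1_comp (fun t => A t i j) tt). apply (C1_tt A dA eps0 tau tt T eps); auto.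
  apply (C1_A A dA eps0); auto. apply (proj2 HT s Hs).
Qed.

Lemma C1_fAtt A dA eps0 tau tt T eps s (F : R -> R) : AHyp A dA eps0 -> THyp A eps0 tau tt T eps ->
  - eps < s < T + eps -> C1f F (tt s) -> C1f (fun r => F (tt r)) s.
Proof. intros HA HT Hs H. apply C1_comp; auto. apply (C1_tt A dA eps0 tau tt T eps); auto. Qed.

Lemma mu_pos A dA eps0 tau tt T eps s : AHyp A dA eps0 -> THyp A eps0 tau tt T eps ->
  - eps < s < T + eps -> 0 < mu_of A tt s.
Proof. intros. unfold mu_of. apply exp_pos. Qed.

Lemma C1_mu A dA eps0 tau tt T eps s : AHyp A dA eps0 -> THyp A eps0 tau tt T eps ->
  - eps < s < T + eps -> C1f (mu_of A tt) s.
Proof.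
  intros HA HT Hs. unfold mu_of.
  apply (C1_fAtt A dA eps0 tau tt T eps s (fun t => Rpower (det3 (A t)) (1/3))); auto.
  apply (C1_mudA A dA eps0); auto. apply (proj2 HT s Hs).
Qed.

Lemma C1_Lam A dA eps0 tau tt T eps s i j : AHyp A dA eps0 -> THyp A eps0 tau tt T eps ->
  - eps < s < T + eps -> (i < 3)%nat -> (j < 3)%nat -> C1f (fun r => Lam_of A tt r i j) s.
Proof.
  intros HA HT Hs Hi Hj. unfold Lam_of.
  assert (Ht := proj1 (proj2 HT s Hs)).
  assert (Hd := proj1 HA (tt s) Ht).
  apply (C1_fAtt A dA eps0 tau tt T eps s
     (fun t => Rpower (det3 (A t)) (2/3) * sum3 (fun k => inv3 (A t) i k * inv3 (A t) j k))); auto.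
  apply C1_mult. apply (C1_mudA A dA eps0); auto.
  apply C1_sum3. intros k Hk. apply C1_mult; apply C1_inv3; auto; try lra;
  intros p q Hp Hq; apply (C1_A A dA eps0); auto.
Qed.

Definition SmoothTh (a b : R) (th : R -> pt -> vec) : Prop :=
  forall i, (i < 3)%nat -> smooth_on (Ub a b) (fun s y => th s y i).

Definition G2 (th : R -> pt -> vec) (s : R) (z : pt) (k : nat) : mat :=
  fun p q => pdy k (fun w => pdy q (fun w' => th s w' p) w) z.

Lemma ex_line_is (F : pt -> R) z k : ex_derive (fun h => F (shift z k h)) 0 ->
  is_derive (fun h => F (shift z k h)) 0 (pdy k F z).
Proof. intros H. unfold pdy. apply Derive_correct. exact H. Qed.

Lemma dTh a b th s z k p : SmoothTh a b th -> a < s < b -> inOmega z -> (k < 3)%nat -> (p < 3)%nat ->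
  is_derive (fun h => th s (shift z k h) p) 0 (pdy k (fun w => th s w p) z).
Proof.
  intros Hs Hsb Hz Hk Hp. apply (ex_line_is (fun w => th s w p)).
  exact (smooth_ex a b _ (S k) s z (Hs p Hp) (conj Hsb Hz) ltac:(lia)).
Qed.

Lemma dG a b th s z k p q : SmoothTh a b th -> a < s < b -> inOmega z -> (k < 3)%nat -> (p < 3)%nat -> (q < 3)%nat ->
  is_derive (fun h => pdy q (fun w => th s w p) (shift z k h)) 0 (G2 th s z k p q).
Proof.
  intros Hs Hsb Hz Hk Hp Hq. apply (ex_line_is (fun w => pdy q (fun w' => th s w' p) w)).
  exact (smooth_ex a b _ (S k) s z (smooth_pd a b _ (S q) (Hs p Hp)) (conj Hsb Hz) ltac:(lia)).
Qed.

Lemma dM a b th s z k p q : SmoothTh a b th -> a < s < b -> inOmega z -> (k < 3)%nat -> (p < 3)%nat -> (q < 3)%nat ->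
  is_derive (fun h => Deta th s (shift z k h) p q) 0 (G2 th s z k p q).
Proof.
  intros. unfold Deta. eapply D_chg. apply D_plus. apply D_const. apply (dG a b); auto. ring.
Qed.

Lemma G2_sym a b th s z k p q : SmoothTh a b th -> a < s < b -> inOmega z -> (k < 3)%nat -> (p < 3)%nat -> (q < 3)%nat ->
  G2 th s z k p q = G2 th s z q p k.
Proof.
  intros Hs Hsb Hz Hk Hp Hq. unfold G2.
  exact (schwarz_ss a b (fun s y => th s y p) s z k q (Hs p Hp) Hsb Hz Hk Hq).
Qed.

Lemma dJac a b th s z k : SmoothTh a b th -> a < s < b -> inOmega z -> (k < 3)%nat ->
  is_derive (fun h => Jac th s (shift z k h)) 0 (ddet3 (Deta th s z) (G2 th s z k)).
Proof.
  intros Hs Hsb Hz Hk.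
  assert (H := is_derive_det3 (fun h => Deta th s (shift z k h)) (G2 th s z k) 0).
  cbv beta in H. rewrite shift0 in H. apply H. intros p q Hp Hq. apply (dM a b); auto.
Qed.

Definition dAc (th : R -> pt -> vec) (s : R) (z : pt) (k a c : nat) : R :=
  - sum3 (fun p => sum3 (fun q => Acal th s z a p * G2 th s z k p q * Acal th s z q c)).

Lemma dAcal a b th s z k i j : SmoothTh a b th -> a < s < b -> inOmega z -> (k < 3)%nat ->
  Jac th s z <> 0 -> (i < 3)%nat -> (j < 3)%nat ->
  is_derive (fun h => Acal th s (shift z k h) i j) 0 (dAc th s z k i j).
Proof.
  intros Hs Hsb Hz Hk HJ Hi Hj.
  assert (H := is_derive_inv3 (fun h => Deta th s (shift z k h)) (G2 th s z k) 0 i j).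
  cbv beta in H. rewrite shift0 in H. apply H; auto. intros p q Hp Hq. apply (dM a b); auto.
Qed.

Definition cW (gamma delta : R) : R := delta * (gamma - 1) / (2 * gamma).
Definition DWf (gamma delta : R) (z : pt) (k : nat) : R := - 2 * cW gamma delta * coord z k.

Lemma dW gamma delta z k : (k < 3)%nat ->
  is_derive (fun h => wfun gamma delta (shift z k h)) 0 (DWf gamma delta z k).
Proof.
  intros Hk. unfold wfun.
  apply D_ext with (fun h => cW gamma delta * (1 - ((coord z 0 + kron k 0 * h) * (coord z 0 + kron k 0 * h) +
     (coord z 1 + kron k 1 * h) * (coord z 1 + kron k 1 * h) + (coord z 2 + kron k 2 * h) * (coord z 2 + kron k 2 * h)))).
  { intros h. cbv beta. rewrite !coord_shift by (auto; lia). unfold cW. ring. }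
  eapply D_chg. dpoly.
  unfold DWf. destruct (lt3_cases k Hk) as [ -> | [ -> | -> ] ]; unfold kron; simpl; ring.
Qed.

Lemma pdy_W gamma delta z k : (k < 3)%nat -> pdy k (wfun gamma delta) z = DWf gamma delta z k.
Proof. intros Hk. apply is_derive_unique. apply dW; auto. Qed.

Lemma dDW gamma delta z q k : (q < 3)%nat -> (k < 3)%nat ->
  is_derive (fun h => DWf gamma delta (shift z q h) k) 0 (- 2 * cW gamma delta * kron q k).
Proof.
  intros Hq Hk. unfold DWf.
  apply D_ext with (fun h => - 2 * cW gamma delta * (coord z k + kron q k * h)).
  { intros h. rewrite coord_shift by auto. reflexivity. }
  eapply D_chg. dpoly. ring.
Qed.

Lemma D_Rpower (f : R -> R) (x l c : R) : is_derive f x l -> 0 < f x ->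
  is_derive (fun t => Rpower (f t) c) x (c * Rpower (f x) c / f x * l).
Proof.
  intros H Hp. eapply D_chg.
  exact (is_derive_comp (fun u => Rpower u c) f x _ l (is_derive_Rpower_fun c (f x) Hp) H).
  simpl. change (l * (c * Rpower (f x) (c - 1)) = c * Rpower (f x) c / f x * l).
  unfold Rminus. rewrite Rpower_plus, Rpower_Ropp, Rpower_1 by auto. field. lra.
Qed.

Lemma D_sum3 (F : R -> nat -> R) (dF : nat -> R) x :
  (forall j, (j < 3)%nat -> is_derive (fun t => F t j) x (dF j)) ->
  is_derive (fun t => sum3 (F t)) x (sum3 dF).
Proof.
  intros H. unfold sum3. apply D_plus; [apply D_plus|]; apply H; lia.
Qed.

Lemma piola_alg (A : mat) (G : nat -> mat) :
  (forall k p q, (k < 3)%nat -> (p < 3)%nat -> (q < 3)%nat -> G k p q = G q p k) -> forall j,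
  sum3 (fun k => sum3 (fun p => sum3 (fun q => A k p * G k p q * A q j))) =
  sum3 (fun k => A k j * sum3 (fun p => sum3 (fun q => A q p * G k p q))).
Proof.
  intros H j.
  transitivity (sum3 (fun k => sum3 (fun p => sum3 (fun q => A k p * G q p k * A q j)))).
  { apply sum3_ext; intros k Hk; apply sum3_ext; intros p Hp; apply sum3_ext; intros q Hq.
    rewrite H; auto. }
  unfold sum3; ring.
Qed.

Definition aexp (gamma : R) : R := - / alpha gamma.
Definition dJz (th : R -> pt -> vec) (s : R) (z : pt) (k : nat) : R := ddet3 (Deta th s z) (G2 th s z k).
Definition Hk (gamma delta : R) (th : R -> pt -> vec) (s : R) (z : pt) (k : nat) : R :=
  DWf gamma delta z k * Rpower (Jac th s z) (aexp gamma)
  + aexp gamma * wfun gamma delta z * Rpower (Jac th s z) (aexp gamma) * dJz th s z k / Jac th s z.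
Definition Bl (gamma delta : R) (th : R -> pt -> vec) (s : R) (z : pt) (l : nat) : R :=
  delta * th s z l + (1 + alpha gamma) *
    (sum3 (fun k => Acal th s z k l * Hk gamma delta th s z k) - DWf gamma delta z l).

Lemma piola a b th s z j : SmoothTh a b th -> a < s < b -> inOmega z -> Jac th s z <> 0 -> (j < 3)%nat ->
  sum3 (fun k => dAc th s z k k j) = - sum3 (fun k => Acal th s z k j * dJz th s z k) / Jac th s z.
Proof.
  intros Hs Hsb Hz HJ Hj. unfold dAc.
  transitivity (- sum3 (fun k => sum3 (fun p => sum3 (fun q => Acal th s z k p * G2 th s z k p q * Acal th s z q j)))).
  { unfold sum3; ring. }
  rewrite (piola_alg (Acal th s z) (G2 th s z)).
  2:{ intros k p q Hk Hp Hq. apply (G2_sym a b); auto. }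
  unfold dJz. field_simplify; [| exact HJ].
  transitivity (- sum3 (fun k => Acal th s z k j * (ddet3 (Deta th s z) (G2 th s z k) / Jac th s z))).
  { f_equal. apply sum3_ext; intros k Hk. f_equal. rewrite ddet3_jacobi by exact HJ. unfold Jac, Acal. field. exact HJ. }
  unfold sum3. field. exact HJ.
Qed.

Definition Qf (gamma delta : R) (L : mat) (th : R -> pt -> vec) (s : R) (i k : nat) (z : pt) : R :=
  Rpower (wfun gamma delta z) (1 + alpha gamma) *
    sum3 (fun j => L i j * (Acal th s z k j * Rpower (Jac th s z) (- / alpha gamma) - kron k j)).

Lemma alpha_pos gamma : 1 < gamma -> 0 < alpha gamma.
Proof. intros H. unfold alpha. apply Rinv_0_lt_compat. lra. Qed.

Lemma dQ a b gamma delta L th s z i k : 1 < gamma -> SmoothTh a b th -> a < s < b -> inOmega z ->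
  0 < Jac th s z -> 0 < wfun gamma delta z -> (k < 3)%nat ->
  pdy k (Qf gamma delta L th s i k) z =
   (1 + alpha gamma) * Rpower (wfun gamma delta z) (1 + alpha gamma) / wfun gamma delta z * DWf gamma delta z k *
     sum3 (fun j => L i j * (Acal th s z k j * Rpower (Jac th s z) (aexp gamma) - kron k j))
   + Rpower (wfun gamma delta z) (1 + alpha gamma) *
     sum3 (fun j => L i j * (dAc th s z k k j * Rpower (Jac th s z) (aexp gamma)
        + Acal th s z k j * (aexp gamma * Rpower (Jac th s z) (aexp gamma) / Jac th s z * dJz th s z k))).
Proof.
  intros Hg Hs Hsb Hz HJ HW Hk. apply is_derive_unique. unfold Qf. pose proof (alpha_pos gamma Hg).
  assert (E : forall h, h = 0 -> shift z k h = z) by (intros h ->; apply shift0).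
  eapply D_chg.
  { apply D_mult.
    - apply D_Rpower. apply dW; auto. rewrite shift0; auto.
    - apply D_sum3. intros j Hj. apply D_mult. apply D_const.
      apply D_minus; [|apply D_const]. apply D_mult.
      + apply (dAcal a b); auto. lra.
      + apply D_Rpower. apply (dJac a b); auto. rewrite shift0; auto. }
  cbv beta. rewrite !shift0. unfold aexp. unfold sum3, dJz. field. repeat split; lra.
Qed.

Lemma pressure a b gamma delta L th s z i : 1 < gamma -> SmoothTh a b th -> a < s < b -> inOmega z ->
  0 < Jac th s z -> 0 < wfun gamma delta z ->
  sum3 (fun k => pdy k (Qf gamma delta L th s i k) z) =
  Rpower (wfun gamma delta z) (alpha gamma) * ((1 + alpha gamma) *
    sum3 (fun l => L i l * (sum3 (fun k => Acal th s z k l * Hk gamma delta th s z k) - DWf gamma delta z l))).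
Proof.
  intros Hg Hs Hsb Hz HJ HW. pose proof (alpha_pos gamma Hg) as Hal.
  rewrite (sum3_ext _ _ (fun k Hk => dQ a b gamma delta L th s z i k Hg Hs Hsb Hz HJ HW Hk)).
  assert (P0 := piola a b th s z 0 Hs Hsb Hz ltac:(lra) ltac:(lia)).
  assert (P1 := piola a b th s z 1 Hs Hsb Hz ltac:(lra) ltac:(lia)).
  assert (P2 := piola a b th s z 2 Hs Hsb Hz ltac:(lra) ltac:(lia)).
  unfold sum3 in P0, P1, P2.
  assert (E0 : dAc th s z 0%nat 0%nat 0%nat = (- (Acal th s z 0%nat 0%nat * dJz th s z 0%nat + Acal th s z 1%nat 0%nat * dJz th s z 1%nat + Acal th s z 2%nat 0%nat * dJz th s z 2%nat) / Jac th s z) - dAc th s z 1%nat 1%nat 0%nat - dAc th s z 2%nat 2%nat 0%nat) by lra.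
  assert (E1 : dAc th s z 0%nat 0%nat 1%nat = (- (Acal th s z 0%nat 1%nat * dJz th s z 0%nat + Acal th s z 1%nat 1%nat * dJz th s z 1%nat + Acal th s z 2%nat 1%nat * dJz th s z 2%nat) / Jac th s z) - dAc th s z 1%nat 1%nat 1%nat - dAc th s z 2%nat 2%nat 1%nat) by lra.
  assert (E2 : dAc th s z 0%nat 0%nat 2%nat = (- (Acal th s z 0%nat 2%nat * dJz th s z 0%nat + Acal th s z 1%nat 2%nat * dJz th s z 1%nat + Acal th s z 2%nat 2%nat * dJz th s z 2%nat) / Jac th s z) - dAc th s z 1%nat 1%nat 2%nat - dAc th s z 2%nat 2%nat 2%nat) by lra.
  assert (EW : Rpower (wfun gamma delta z) (1 + alpha gamma) = wfun gamma delta z * Rpower (wfun gamma delta z) (alpha gamma)).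
  { rewrite Rpower_plus, Rpower_1 by auto. ring. }
  rewrite EW. unfold sum3, Hk, kron. simpl. rewrite E0, E1, E2. unfold aexp. field. repeat split; lra.
Qed.

Definition G3 (th : R -> pt -> vec) (s : R) (y : pt) (q k p r : nat) : R :=
  pdy q (fun w => G2 th s w k p r) y.

Definition d2J (th : R -> pt -> vec) (s : R) (y : pt) (q k : nat) : R :=
  sum3 (fun p => sum3 (fun r => dcof3 (Deta th s y) (G2 th s y q) p r * G2 th s y k p r
                                + cof3 (Deta th s y) p r * G3 th s y q k p r)).

Lemma dG2 a b th s z q k p r : SmoothTh a b th -> a < s < b -> inOmega z ->
  (q < 3)%nat -> (k < 3)%nat -> (p < 3)%nat -> (r < 3)%nat ->
  is_derive (fun h => G2 th s (shift z q h) k p r) 0 (G3 th s z q k p r).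
Proof.
  intros Hs Hsb Hz Hq Hk Hp Hr. apply (ex_line_is (fun w => G2 th s w k p r)).
  exact (smooth_ex a b _ (S q) s z (smooth_pd a b _ (S k) (smooth_pd a b _ (S r) (Hs p Hp))) (conj Hsb Hz) ltac:(lia)).
Qed.

Lemma G3_sym a b th s z q k p r : SmoothTh a b th -> a < s < b -> inOmega z ->
  (q < 3)%nat -> (k < 3)%nat -> (p < 3)%nat -> (r < 3)%nat ->
  G3 th s z q k p r = G3 th s z k q p r.
Proof.
  intros Hs Hsb Hz Hq Hk Hp Hr. unfold G3, G2.
  exact (schwarz_ss a b (pd (S r) (fun s y => th s y p)) s z q k (smooth_pd a b _ (S r) (Hs p Hp)) Hsb Hz Hq Hk).
Qed.

Lemma d2J_sym a b th s z q k : SmoothTh a b th -> a < s < b -> inOmega z ->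
  (q < 3)%nat -> (k < 3)%nat -> d2J th s z q k = d2J th s z k q.
Proof.
  intros Hs Hsb Hz Hq Hk. unfold d2J.
  set (M := Deta th s z).
  transitivity (sum3 (fun p => sum3 (fun r => dcof3 M (G2 th s z q) p r * G2 th s z k p r))
     + sum3 (fun p => sum3 (fun r => cof3 M p r * G3 th s z q k p r))).
  { unfold sum3; ring. }
  rewrite dcof_sym.
  transitivity (sum3 (fun p => sum3 (fun r => dcof3 M (G2 th s z k) p r * G2 th s z q p r))
     + sum3 (fun p => sum3 (fun r => cof3 M p r * G3 th s z k q p r))).
  { f_equal. apply sum3_ext; intros p Hp; apply sum3_ext; intros r Hr. rewrite (G3_sym a b); auto. }
  unfold sum3; ring.
Qed.

Lemma d_dJz a b th s z q k : SmoothTh a b th -> a < s < b -> inOmega z ->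
  (q < 3)%nat -> (k < 3)%nat ->
  is_derive (fun h => dJz th s (shift z q h) k) 0 (d2J th s z q k).
Proof.
  intros Hs Hsb Hz Hq Hk. unfold dJz, ddet3, d2J.
  apply D_sum3; intros p Hp. apply D_sum3; intros r Hr.
  assert (HC := is_derive_cof3 (fun h => Deta th s (shift z q h)) (G2 th s z q) 0 p r).
  cbv beta in HC. rewrite shift0 in HC.
  eapply D_chg. apply D_mult. apply HC. intros p' q' Hp' Hq'. apply (dM a b); auto.
  apply (dG2 a b); auto.
  cbv beta. rewrite shift0. reflexivity.
Qed.

Definition DHf (gamma delta : R) (th : R -> pt -> vec) (s : R) (y : pt) (q k : nat) : R :=
  let J := Jac th s y in let a := aexp gamma in let P := Rpower J a in let W := wfun gamma delta y in
  let DP := a * P / J * dJz th s y q in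
  (- 2 * cW gamma delta * kron q k) * P + DWf gamma delta y k * DP
  + a * (DWf gamma delta y q * P * dJz th s y k / J + W * DP * dJz th s y k / J
         + W * P * d2J th s y q k / J - W * P * dJz th s y k * dJz th s y q / (J * J)).

Lemma dHk a b gamma delta th s y q k : SmoothTh a b th -> a < s < b -> inOmega y ->
  0 < Jac th s y -> (q < 3)%nat -> (k < 3)%nat ->
  is_derive (fun h => Hk gamma delta th s (shift y q h) k) 0 (DHf gamma delta th s y q k).
Proof.
  intros Hs Hsb Hz HJ Hq Hk3. unfold Hk.
  assert (DJ := dJac a b th s y q Hs Hsb Hz Hq). 
  eapply D_chg.
  { apply D_plus.
    - apply D_mult. apply dDW; auto. apply D_Rpower. exact DJ. rewrite shift0; auto.
    - apply D_div.
      + apply D_mult. apply D_mult. apply D_mult. apply D_const. apply dW; auto.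
        apply D_Rpower. exact DJ. rewrite shift0; auto.
        apply (d_dJz a b); auto.
      + exact DJ.
      + rewrite shift0; lra. }
  cbv beta. rewrite !shift0. unfold DHf, dJz. field. lra.
Qed.

Lemma DHf_sym a b gamma delta th s y q k : SmoothTh a b th -> a < s < b -> inOmega y ->
  (q < 3)%nat -> (k < 3)%nat -> DHf gamma delta th s y q k = DHf gamma delta th s y k q.
Proof.
  intros Hs Hsb Hz Hq Hk. unfold DHf. cbv zeta. rewrite (d2J_sym a b th s y q k); auto. rewrite (kron_sym q k). unfold Rdiv. ring.
Qed.

Definition DBf (gamma delta : R) (th : R -> pt -> vec) (s : R) (y : pt) (q l : nat) : R :=
  delta * pdy q (fun w => th s w l) y + (1 + alpha gamma) *
   (sum3 (fun k => dAc th s y q k l * Hk gamma delta th s y k + Acal th s y k l * DHf gamma delta th s y q k)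
    - (- 2 * cW gamma delta * kron q l)).

Lemma dBl a b gamma delta th s y q l : SmoothTh a b th -> a < s < b -> inOmega y ->
  0 < Jac th s y -> (q < 3)%nat -> (l < 3)%nat ->
  is_derive (fun h => Bl gamma delta th s (shift y q h) l) 0 (DBf gamma delta th s y q l).
Proof.
  intros Hs Hsb Hz HJ Hq Hl. unfold Bl, DBf.
  eapply D_chg.
  { apply D_plus.
    - apply D_mult. apply D_const. apply (dTh a b); auto.
    - apply D_mult. apply D_const. apply D_minus.
      + apply D_sum3. intros k Hk3. apply D_mult. apply (dAcal a b); auto. lra. apply (dHk a b); auto.
      + apply dDW; auto. }
  cbv beta. rewrite !shift0. unfold sum3. ring.
Qed.

Definition Ssym (gamma delta : R) (th : R -> pt -> vec) (s : R) (y : pt) (m l : nat) : R :=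
  sum3 (fun q => Acal th s y q m * DBf gamma delta th s y q l).

Lemma sum3_swap13 (f : nat -> nat -> nat -> R) :
  sum3 (fun a => sum3 (fun b => sum3 (fun c => f a b c))) = sum3 (fun c => sum3 (fun b => sum3 (fun a => f a b c))).
Proof. unfold sum3; ring. Qed.

Lemma Ssym_sym a b gamma delta th s y m l : 1 < gamma -> SmoothTh a b th -> a < s < b -> inOmega y ->
  0 < Jac th s y -> (m < 3)%nat -> (l < 3)%nat ->
  Ssym gamma delta th s y m l = Ssym gamma delta th s y l m.
Proof.
  intros Hg Hs Hsb Hz HJ Hm Hl.
  set (A := Acal th s y).
  set (T := fun k m l => sum3 (fun q => A q m * dAc th s y q k l)).
  set (U := fun m l => sum3 (fun q => sum3 (fun k => A q m * A k l * DHf gamma delta th s y q k))).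
  assert (Dec : forall m l, (m < 3)%nat -> (l < 3)%nat -> Ssym gamma delta th s y m l =
     delta * kron l m + (1 + alpha gamma) * (sum3 (fun k => Hk gamma delta th s y k * T k m l) + U m l)).
  { intros m' l' Hm' Hl'.
    assert (F1 : sum3 (fun q => A q m' * pdy q (fun w => th s w l') y) = kron l' m' - A l' m').
    { rewrite <- (inv3_right (Deta th s y) l' m') by (auto; unfold Jac in HJ; lra).
      rewrite <- (sum3_kron l' (fun q => A q m')) by auto.
      rewrite <- sum3_minus. apply sum3_ext. intros q Hq. unfold A, Acal, Deta. ring. }
    assert (F2 : sum3 (fun q => A q m' * kron q l') = A l' m').
    { rewrite <- (sum3_kron' l' (fun q => A q m')) by auto. apply sum3_ext; intros; ring. }
    assert (Hc : (1 + alpha gamma) * (2 * cW gamma delta) = delta).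
    { unfold alpha, cW. field. lra. }
    transitivity (delta * sum3 (fun q => A q m' * pdy q (fun w => th s w l') y)
       + (1 + alpha gamma) * (sum3 (fun k => Hk gamma delta th s y k * T k m' l') + U m' l')
       + (1 + alpha gamma) * (2 * cW gamma delta) * sum3 (fun q => A q m' * kron q l')).
    { unfold Ssym, DBf, T, U. fold A. unfold sum3. ring. }
    rewrite F1, F2, Hc. ring. }
  rewrite !Dec by auto. rewrite (kron_sym l m). f_equal. f_equal. f_equal.
  - apply sum3_ext. intros k Hk3. f_equal. unfold T, dAc. fold A.
    transitivity (- sum3 (fun q => sum3 (fun p => sum3 (fun r => A q m * A k p * G2 th s y q p r * A r l)))).
    { unfold sum3; ring. }
    transitivity (- sum3 (fun q => sum3 (fun p => sum3 (fun r => A q m * A k p * G2 th s y r p q * A r l)))).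
    { f_equal. apply sum3_ext; intros q Hq; apply sum3_ext; intros p Hp; apply sum3_ext; intros r Hr.
      rewrite (G2_sym a b th s y q p r); auto. }
    rewrite sum3_swap13. unfold sum3; ring.
  - unfold U. rewrite sum3_swap. apply sum3_ext; intros q Hq; apply sum3_ext; intros k Hk3.
    rewrite (DHf_sym a b gamma delta th s y q k); auto. ring.
Qed.

Lemma curl_core (L A : mat) (DX DB : nat -> nat -> R) (kap : R) i j :
  (i < 3)%nat -> (j < 3)%nat ->
  (forall q c, (q < 3)%nat -> (c < 3)%nat -> DX q c = - kap * sum3 (fun l => L c l * DB q l)) ->
  (forall m l, (m < 3)%nat -> (l < 3)%nat ->
     sum3 (fun q => A q m * DB q l) = sum3 (fun q => A q l * DB q m)) ->
  sum3 (fun m => L j m * sum3 (fun q => A q m * DX q i))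
  - sum3 (fun m => L i m * sum3 (fun q => A q m * DX q j)) = 0.
Proof.
  intros Hi Hj HX HS.
  transitivity (sum3 (fun m => L j m * sum3 (fun q => A q m * (- kap * sum3 (fun l => L i l * DB q l))))
    - sum3 (fun m => L i m * sum3 (fun q => A q m * (- kap * sum3 (fun l => L j l * DB q l))))).
  { f_equal; apply sum3_ext; intros m Hm; f_equal; apply sum3_ext; intros q Hq; rewrite HX; auto. }
  set (S := fun m l => sum3 (fun q => A q m * DB q l)).
  transitivity (- kap * sum3 (fun m => sum3 (fun l => (L j m * L i l - L i m * L j l) * S m l))).
  { unfold S, sum3; ring. }
  assert (S10 : S 1%nat 0%nat = S 0%nat 1%nat) by (symmetry; apply HS; lia).
  assert (S20 : S 2%nat 0%nat = S 0%nat 2%nat) by (symmetry; apply HS; lia).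
  assert (S21 : S 2%nat 1%nat = S 1%nat 2%nat) by (symmetry; apply HS; lia).
  unfold sum3. rewrite S10, S20, S21. ring.
Qed.

Lemma W_pos gamma delta z : 1 < gamma -> 0 < delta -> inOmega z -> 0 < wfun gamma delta z.
Proof.
  intros Hg Hd Hz. unfold wfun, inOmega in *. apply Rmult_lt_0_compat; [|lra].
  unfold Rdiv. apply Rmult_lt_0_compat. apply Rmult_lt_0_compat; lra. apply Rinv_0_lt_compat; lra.
Qed.

Lemma loc_Omega y q : inOmega y -> (q < 3)%nat -> locally 0 (fun h => inOmega (shift y q h)).
Proof.
  intros Hy Hq. destruct (Omega_near1 y q Hq Hy) as [d Hd]. exists d. intros h Hh. apply Hd.
  change (Rabs (h - 0) < d) in Hh. rewrite Rminus_0_r in Hh. exact Hh.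
Qed.

Lemma dV a b th s y q c : SmoothTh a b th -> a < s < b -> inOmega y -> (q < 3)%nat -> (c < 3)%nat ->
  is_derive (fun h => Vel th s (shift y q h) c) 0 (pdy q (fun z => Vel th s z c) y).
Proof.
  intros Hs Hsb Hy Hq Hc. apply (ex_line_is (fun z => Vel th s z c)).
  exact (smooth_ex a b _ (S q) s y (smooth_pd a b _ 0 (Hs c Hc)) (conj Hsb Hy) ltac:(lia)).
Qed.

Lemma dVt a b th s y q c : SmoothTh a b th -> a < s < b -> inOmega y -> (q < 3)%nat -> (c < 3)%nat ->
  is_derive (fun h => Derive (fun r => Vel th r (shift y q h) c) s) 0
    (pdy q (fun z => Derive (fun r => Vel th r z c) s) y).
Proof.
  intros Hs Hsb Hy Hq Hc. apply (ex_line_is (fun z => Derive (fun r => Vel th r z c) s)).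
  exact (smooth_ex a b _ (S q) s y (smooth_pd a b _ 0 (smooth_pd a b _ 0 (Hs c Hc))) (conj Hsb Hy) ltac:(lia)).
Qed.

Lemma curl_eq gamma delta (A : R -> mat) (tt : R -> R) T eps theta r y i j :
  1 < gamma -> 0 < delta -> 0 < eps -> SmoothTh (- eps) (T + eps) theta ->
  (forall s y, 0 <= s <= T -> inOmega y -> 0 < Jac theta s y) ->
  (forall s y i, 0 <= s <= T -> inOmega y -> (i < 3)%nat ->
     let mu := mu_of A tt in
     let Lam := Lam_of A tt in
     let Gam := Gam_of A tt in
     let V := Vel theta in
     let al := alpha gamma in
     Rpower (wfun gamma delta y) al * Rpower (mu s) (3 * gamma - 3) *
       (Derive (fun r => V r y i) s + Derive mu s / mu s * V s y i
        + 2 * sum3 (fun j => Gam s i j * V s y j))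
     + delta * Rpower (wfun gamma delta y) al * sum3 (fun l => Lam s i l * theta s y l)
     + sum3 (fun k => pdy k (fun z => Rpower (wfun gamma delta z) (1 + al) *
          sum3 (fun j => Lam s i j *
                  (Acal theta s z k j * Rpower (Jac theta s z) (- / al) - kron k j))) y)
     = 0) ->
  0 <= r <= T -> inOmega y -> (i < 3)%nat -> (j < 3)%nat ->
  curlLA (Lam_of A tt r) (Acal theta r) (fun z k => Derive (fun q => Vel theta q z k) r) y i j
  + Derive (mu_of A tt) r / mu_of A tt r * curlLA (Lam_of A tt r) (Acal theta r) (Vel theta r) y i j
  + 2 * curlLA (Lam_of A tt r) (Acal theta r) (GamV (Gam_of A tt) (Vel theta) r) y i j = 0.
Proof.
  intros Hg Hd He Hs HJ Heq Hr Hy Hi Hj.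
  assert (Hrb : - eps < r < T + eps) by lra.
  set (L := Lam_of A tt r). set (G := Gam_of A tt r). set (m := mu_of A tt r).
  set (dm := Derive (mu_of A tt) r / m).
  set (kap := / Rpower m (3 * gamma - 3)).
  set (X := fun z c => Derive (fun q => Vel theta q z c) r + dm * Vel theta r z c
                       + 2 * sum3 (fun l => G c l * Vel theta r z l)).
  assert (HX : forall z c, inOmega z -> (c < 3)%nat ->
            X z c = - kap * sum3 (fun l => L c l * Bl gamma delta theta r z l)).
  { intros z c Hz Hc. specialize (Heq r z c Hr Hz Hc). cbv zeta in Heq.
    pose proof (W_pos gamma delta z Hg Hd Hz) as HW.
    pose proof (HJ r z Hr Hz) as HJz.
    assert (Pr := pressure (- eps) (T + eps) gamma delta L theta r z c Hg Hs Hrb Hz HJz HW).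
    unfold Qf in Pr. fold L in Heq. rewrite Pr in Heq.
    assert (Hm : 0 < Rpower m (3 * gamma - 3)) by apply exp_pos.
    assert (HWa : 0 < Rpower (wfun gamma delta z) (alpha gamma)) by apply exp_pos.
    unfold X, kap, Bl, dm. fold G m in Heq.
    apply (Rmult_eq_reg_l (Rpower (wfun gamma delta z) (alpha gamma) * Rpower m (3 * gamma - 3))).
    2:{ apply Rgt_not_eq. apply Rmult_lt_0_compat; auto. }
    transitivity (- (delta * Rpower (wfun gamma delta z) (alpha gamma) * sum3 (fun l => L c l * theta r z l) +
       Rpower (wfun gamma delta z) (alpha gamma) * ((1 + alpha gamma) *
        sum3 (fun l => L c l * (sum3 (fun k => Acal theta r z k l * Hk gamma delta theta r z k) - DWf gamma delta z l))))).
    { lra. }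
    rewrite <- (sum3_scal (- / Rpower m (3 * gamma - 3))).
    unfold sum3. field. lra. }
  set (DX := fun q c => pdy q (fun z => Derive (fun q' => Vel theta q' z c) r) y
                        + dm * pdy q (fun z => Vel theta r z c) y
                        + 2 * sum3 (fun l => G c l * pdy q (fun z => Vel theta r z l) y)).
  assert (HDX1 : forall q c, (q < 3)%nat -> (c < 3)%nat ->
     is_derive (fun h => X (shift y q h) c) 0 (DX q c)).
  { intros q c Hq Hc. unfold X, DX.
    apply D_plus; [apply D_plus|].
    - apply (dVt (- eps) (T + eps)); auto.
    - apply D_chg with (0 * Vel theta r (shift y q 0) c + dm * pdy q (fun z => Vel theta r z c) y).
      apply D_mult. apply D_const. apply (dV (- eps) (T + eps)); auto. ring.
    - apply D_chg with (0 * sum3 (fun l => G c l * Vel theta r (shift y q 0) l) +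
                        2 * sum3 (fun l => G c l * pdy q (fun z => Vel theta r z l) y)).
      apply D_mult. apply D_const. apply D_sum3. intros l Hl.
      apply D_chg with (0 * Vel theta r (shift y q 0) l + G c l * pdy q (fun z => Vel theta r z l) y).
      apply D_mult. apply D_const. apply (dV (- eps) (T + eps)); auto. ring. ring. }
  assert (HJy := HJ r y Hr Hy).
  assert (HDX2 : forall q c, (q < 3)%nat -> (c < 3)%nat ->
     DX q c = - kap * sum3 (fun l => L c l * DBf gamma delta theta r y q l)).
  { intros q c Hq Hc. rewrite <- (is_derive_unique _ _ _ (HDX1 q c Hq Hc)). apply is_derive_unique.
    apply is_derive_ext_loc with (fun h => - kap * sum3 (fun l => L c l * Bl gamma delta theta r (shift y q h) l)).
    { eapply filter_imp; [|exact (loc_Omega y q Hy Hq)]. intros h Hh. symmetry. apply HX; auto. }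
    eapply D_chg.
    { apply D_mult. apply D_const. apply D_sum3. intros l Hl.
      apply D_mult. apply D_const. apply (dBl (- eps) (T + eps)); auto. }
    cbv beta. unfold sum3. ring. }
  assert (HGV : forall q c, (q < 3)%nat -> (c < 3)%nat ->
     pdy q (fun z => GamV (Gam_of A tt) (Vel theta) r z c) y = sum3 (fun l => G c l * pdy q (fun z => Vel theta r z l) y)).
  { intros q c Hq Hc. apply is_derive_unique. unfold GamV. apply D_sum3. intros l Hl.
    apply D_chg with (0 * Vel theta r (shift y q 0) l + G c l * pdy q (fun z => Vel theta r z l) y).
    apply D_mult. apply D_const. apply (dV (- eps) (T + eps)); auto. ring. }
  transitivity (sum3 (fun m' => L j m' * sum3 (fun q => Acal theta r y q m' * DX q i))
      - sum3 (fun m' => L i m' * sum3 (fun q => Acal theta r y q m' * DX q j))).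
  { unfold curlLA. fold L.
    rewrite (sum3_ext (fun m' => L j m' * sum3 (fun k => Acal theta r y k m' * pdy k (fun z => GamV (Gam_of A tt) (Vel theta) r z i) y))
               (fun m' => L j m' * sum3 (fun k => Acal theta r y k m' * sum3 (fun l => G i l * pdy k (fun z => Vel theta r z l) y)))).
    2:{ intros m' Hm'. f_equal. apply sum3_ext. intros k Hk. rewrite HGV; auto. }
    rewrite (sum3_ext (fun m' => L i m' * sum3 (fun k => Acal theta r y k m' * pdy k (fun z => GamV (Gam_of A tt) (Vel theta) r z j) y))
               (fun m' => L i m' * sum3 (fun k => Acal theta r y k m' * sum3 (fun l => G j l * pdy k (fun z => Vel theta r z l) y)))).
    2:{ intros m' Hm'. f_equal. apply sum3_ext. intros k Hk. rewrite HGV; auto. }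
    unfold DX, sum3. ring. }
  apply (curl_core L (Acal theta r y) DX (DBf gamma delta theta r y) kap i j Hi Hj HDX2).
  intros m' l Hm' Hl. exact (Ssym_sym (- eps) (T + eps) gamma delta theta r y m' l Hg Hs Hrb Hy HJy Hm' Hl).
Qed.

Lemma dP_time a b F r y q c : SmoothTh a b F -> a < r < b -> inOmega y -> (q < 3)%nat -> (c < 3)%nat ->
  is_derive (fun r' => pdy q (fun z => F r' z c) y) r (pdy q (fun z => Derive (fun q' => F q' z c) r) y).
Proof.
  intros Hs Hr Hy Hq Hc.
  rewrite <- (schwarz_ts a b (fun s y => F s y c) r y q (Hs c Hc) Hr Hy Hq).
  apply Derive_correct.
  exact (smooth_ex a b (pd (S q) (fun s y => F s y c)) 0 r y (smooth_pd a b _ (S q) (Hs c Hc)) (conj Hr Hy) ltac:(lia)).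
Qed.

Lemma d_curl a b (L : R -> mat) (Ac : R -> pt -> mat) F r y i j :
  SmoothTh a b F -> a < r < b -> inOmega y -> (i < 3)%nat -> (j < 3)%nat ->
  (forall c m q, (c < 3)%nat -> (m < 3)%nat -> (q < 3)%nat -> ex_derive (fun r' => L r' c m * Ac r' y q m) r) ->
  is_derive (fun r' => curlLA (L r') (Ac r') (F r') y i j) r
    (commLA L Ac F r y i j + curlLA (L r) (Ac r) (fun z k => Derive (fun q => F q z k) r) y i j).
Proof.
  intros Hs Hr Hy Hi Hj HE.
  apply D_ext with (fun r' => sum3 (fun m => sum3 (fun q => (L r' j m * Ac r' y q m) * pdy q (fun z => F r' z i) y))
                            - sum3 (fun m => sum3 (fun q => (L r' i m * Ac r' y q m) * pdy q (fun z => F r' z j) y))).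
  { intros t. cbv beta. unfold curlLA, sum3. unfold Rminus. ring. }
  assert (HLA : forall c m q, (c < 3)%nat -> (m < 3)%nat -> (q < 3)%nat ->
     is_derive (fun r' => L r' c m * Ac r' y q m) r (Derive (fun r' : R => L r' c m * Ac r' y q m) r)).
  { intros c m q Hc Hm Hq. apply Derive_correct. apply HE; auto. }
  eapply D_chg.
  { apply D_minus; apply D_sum3; intros m Hm; apply D_sum3; intros q Hq; apply D_mult.
    - apply HLA; auto.
    - apply (dP_time a b); auto.
    - apply HLA; auto.
    - apply (dP_time a b); auto. }
  unfold commLA, curlLA, sum3. ring.
Qed.

Lemma Smooth_Vel a b th : SmoothTh a b th -> SmoothTh a b (Vel th).
Proof. intros H c Hc. exact (smooth_pd a b _ 0 (H c Hc)). Qed.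

Lemma C0_smooth a b (g : R -> pt -> R) r y : smooth_on (Ub a b) g -> a < r < b -> inOmega y ->
  continuous (fun r' => g r' y) r.
Proof. intros H Hr Hy. apply (cont1d_gen g r y). exact (smooth_cont a b g r y H (conj Hr Hy)). Qed.

Lemma C1_pdy a b F r y q c : SmoothTh a b F -> a < r < b -> inOmega y -> (q < 3)%nat -> (c < 3)%nat ->
  C1f (fun r' => pdy q (fun z => F r' z c) y) r.
Proof.
  intros Hs Hr Hy Hq Hc.
  apply (C1_of _ (fun r' => pdy q (fun z => Derive (fun q' => F q' z c) r') y)).
  - eapply filter_imp; [|exact (loc_interval a b r Hr)]. intros r' Hr'. apply (dP_time a b); auto.
  - apply (C0_smooth a b (pd (S q) (pd 0 (fun s y => F s y c)))); auto.
    apply smooth_pd, smooth_pd, Hs; auto.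
Qed.

Lemma C0_pdy a b F r y q c : SmoothTh a b F -> a < r < b -> inOmega y -> (q < 3)%nat -> (c < 3)%nat ->
  continuous (fun r' => pdy q (fun z => F r' z c) y) r.
Proof. intros. apply C1_C0. apply (C1_pdy a b); auto. Qed.

Lemma C1_Deta a b th r y p q : SmoothTh a b th -> a < r < b -> inOmega y -> (p < 3)%nat -> (q < 3)%nat ->
  C1f (fun r' => Deta th r' y p q) r.
Proof. intros. unfold Deta. apply C1_plus. apply C1_const. apply (C1_pdy a b); auto. Qed.

Lemma C1_Ac a b th r y q m : SmoothTh a b th -> a < r < b -> inOmega y -> Jac th r y <> 0 ->
  (q < 3)%nat -> (m < 3)%nat -> C1f (fun r' => Acal th r' y q m) r.
Proof.
  intros Hs Hr Hy HJ Hq Hm. unfold Acal. apply (C1_inv3 (fun r' => Deta th r' y)); auto.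
  intros p q' Hp Hq'. apply (C1_Deta a b); auto.
Qed.

Lemma C1_LA A dA eps0 tau tt T eps th r y c m q :
  AHyp A dA eps0 -> THyp A eps0 tau tt T eps -> SmoothTh (- eps) (T + eps) th ->
  - eps < r < T + eps -> inOmega y -> Jac th r y <> 0 -> (c < 3)%nat -> (m < 3)%nat -> (q < 3)%nat ->
  C1f (fun r' => Lam_of A tt r' c m * Acal th r' y q m) r.
Proof.
  intros HA HT Hs Hr Hy HJ Hc Hm Hq. apply C1_mult.
  apply (C1_Lam A dA eps0 tau tt T eps); auto.
  apply (C1_Ac (- eps) (T + eps)); auto.
Qed.

Lemma C0_comm A dA eps0 tau tt T eps th F r y i j :
  AHyp A dA eps0 -> THyp A eps0 tau tt T eps -> SmoothTh (- eps) (T + eps) th -> SmoothTh (- eps) (T + eps) F ->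
  - eps < r < T + eps -> inOmega y -> Jac th r y <> 0 -> (i < 3)%nat -> (j < 3)%nat ->
  continuous (fun r' => commLA (Lam_of A tt) (Acal th) F r' y i j) r.
Proof.
  intros HA HT Hs HF Hr Hy HJ Hi Hj. unfold commLA.
  apply C0_minus; apply C0_sum3; intros m Hm; apply C0_sum3; intros q Hq; apply C0_mult.
  - exact (proj2 (C1_LA A dA eps0 tau tt T eps th r y j m q HA HT Hs Hr Hy HJ Hj Hm Hq)).
  - apply (C0_pdy (- eps) (T + eps)); auto.
  - exact (proj2 (C1_LA A dA eps0 tau tt T eps th r y i m q HA HT Hs Hr Hy HJ Hi Hm Hq)).
  - apply (C0_pdy (- eps) (T + eps)); auto.
Qed.

Lemma C1_O A dA eps0 tau tt T eps r i j : AHyp A dA eps0 -> THyp A eps0 tau tt T eps ->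
  - eps < r < T + eps -> (i < 3)%nat -> (j < 3)%nat -> C1f (fun r' => O_of A tt r' i j) r.
Proof.
  intros HA HT Hr Hi Hj. unfold O_of. apply C1_div.
  apply (C1_Att A dA eps0 tau tt T eps); auto.
  apply (C1_mu A dA eps0 tau tt T eps); auto.
  apply Rgt_not_eq. apply (mu_pos A dA eps0 tau tt T eps); auto.
Qed.

Lemma detO_pos A dA eps0 tau tt T eps r : AHyp A dA eps0 -> THyp A eps0 tau tt T eps ->
  - eps < r < T + eps -> 0 < det3 (O_of A tt r).
Proof.
  intros HA HT Hr. assert (Hm := mu_pos A dA eps0 tau tt T eps r HA HT Hr).
  assert (Hd := proj1 HA (tt r) (proj1 (proj2 HT r Hr))).
  replace (det3 (O_of A tt r)) with (det3 (A (tt r)) / (mu_of A tt r * mu_of A tt r * mu_of A tt r)).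
  - apply Rdiv_lt_0_compat; auto. repeat apply Rmult_lt_0_compat; auto.
  - unfold det3, O_of. field. lra.
Qed.

Lemma C0_Gam A dA eps0 tau tt T eps r i l : AHyp A dA eps0 -> THyp A eps0 tau tt T eps ->
  - eps < r < T + eps -> (i < 3)%nat -> (l < 3)%nat -> continuous (fun r' => Gam_of A tt r' i l) r.
Proof.
  intros HA HT Hr Hi Hl. unfold Gam_of. apply C0_sum3. intros k Hk. apply C0_mult.
  - apply (C0_inv3 (fun r' => O_of A tt r')); auto.
    + intros p q Hp Hq. apply C1_C0. apply (C1_O A dA eps0 tau tt T eps); auto.
    + apply Rgt_not_eq. apply (detO_pos A dA eps0 tau tt T eps); auto.
  - exact (proj2 (C1_O A dA eps0 tau tt T eps r k l HA HT Hr Hk Hl)).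
Qed.

Lemma pdy_GV a b (G : R -> mat) th r y q c : SmoothTh a b th -> a < r < b -> inOmega y -> (q < 3)%nat -> (c < 3)%nat ->
  pdy q (fun z => GamV G (Vel th) r z c) y = sum3 (fun l => G r c l * pdy q (fun z => Vel th r z l) y).
Proof.
  intros Hs Hr Hy Hq Hc. apply is_derive_unique. unfold GamV.
  eapply D_chg.
  { apply D_sum3. intros l Hl. apply D_mult. apply D_const. apply (dV a b); auto. }
  unfold sum3; ring.
Qed.

Lemma C0_curlGV A dA eps0 tau tt T eps th r y i j :
  AHyp A dA eps0 -> THyp A eps0 tau tt T eps -> SmoothTh (- eps) (T + eps) th ->
  - eps < r < T + eps -> inOmega y -> Jac th r y <> 0 -> (i < 3)%nat -> (j < 3)%nat ->
  continuous (fun r' => curlLA (Lam_of A tt r') (Acal th r') (GamV (Gam_of A tt) (Vel th) r') y i j) r.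
Proof.
  intros HA HT Hs Hr Hy HJ Hi Hj.
  apply C0_ext_loc with (fun r' =>
     sum3 (fun m => Lam_of A tt r' j m * sum3 (fun k => Acal th r' y k m * sum3 (fun l => Gam_of A tt r' i l * pdy k (fun z => Vel th r' z l) y)))
   - sum3 (fun m => Lam_of A tt r' i m * sum3 (fun k => Acal th r' y k m * sum3 (fun l => Gam_of A tt r' j l * pdy k (fun z => Vel th r' z l) y)))).
  { eapply filter_imp; [|exact (loc_interval _ _ r Hr)]. intros r' Hr'. unfold curlLA.
    f_equal; apply sum3_ext; intros m Hm; f_equal; apply sum3_ext; intros k Hk; f_equal;
    symmetry; apply (pdy_GV (- eps) (T + eps)); auto. }
  assert (HV := Smooth_Vel _ _ th Hs).
  assert (CL : forall c m, (c < 3)%nat -> (m < 3)%nat -> continuous (fun r' => Lam_of A tt r' c m) r).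
  { intros c m Hc Hm. apply C1_C0. apply (C1_Lam A dA eps0 tau tt T eps); auto. }
  assert (CA : forall k m, (k < 3)%nat -> (m < 3)%nat -> continuous (fun r' => Acal th r' y k m) r).
  { intros k m Hk Hm. apply C1_C0. apply (C1_Ac (- eps) (T + eps)); auto. }
  assert (CG : forall c l, (c < 3)%nat -> (l < 3)%nat -> continuous (fun r' => Gam_of A tt r' c l) r).
  { intros c l Hc Hl. apply (C0_Gam A dA eps0 tau tt T eps); auto. }
  assert (CP : forall k l, (k < 3)%nat -> (l < 3)%nat -> continuous (fun r' => pdy k (fun z => Vel th r' z l) y) r).
  { intros k l Hk Hl. apply (C0_pdy (- eps) (T + eps)); auto. }
  apply C0_minus; apply C0_sum3; intros m Hm; apply C0_mult; [apply CL; auto | | apply CL; auto | ];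
  apply C0_sum3; intros k Hk; apply C0_mult; [apply CA; auto | | apply CA; auto | ];
  apply C0_sum3; intros l Hl; apply C0_mult; auto.
Qed.

Lemma IR_plus (f g : R -> R) a b If Ig : is_RInt f a b If -> is_RInt g a b Ig ->
  is_RInt (fun x => f x + g x) a b (If + Ig).
Proof. intros H1 H2. exact (is_RInt_plus f g a b If Ig H1 H2). Qed.
Lemma IR_minus (f g : R -> R) a b If Ig : is_RInt f a b If -> is_RInt g a b Ig ->
  is_RInt (fun x => f x - g x) a b (If - Ig).
Proof. intros H1 H2. exact (is_RInt_minus f g a b If Ig H1 H2). Qed.
Lemma IR_scal (f : R -> R) a b k If : is_RInt f a b If ->
  is_RInt (fun x => k * f x) a b (k * If).
Proof. intros H1. exact (is_RInt_scal f a b k If H1). Qed.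
Lemma IR_ext (f g : R -> R) a b l : (forall x, a < x < b -> f x = g x) -> a <= b ->
  is_RInt f a b l -> is_RInt g a b l.
Proof.
  intros H Hab H1. apply (is_RInt_ext f g a b l); auto.
  intros x Hx. rewrite Rmin_left, Rmax_right in Hx by auto. apply H; auto.
Qed.
Lemma IR_cont (f : R -> R) a b : a <= b -> (forall x, a <= x <= b -> continuous f x) ->
  is_RInt f a b (RInt f a b).
Proof.
  intros Hab H. assert (E : ex_RInt f a b).
  { apply (ex_RInt_continuous (V := R_CompleteNormedModule)). intros z Hz. rewrite Rmin_left, Rmax_right in Hz by auto. apply H; auto. }
  exact (RInt_correct f a b E).
Qed.
Lemma IR_derive (F f : R -> R) a b : a <= b ->
  (forall x, a <= x <= b -> is_derive F x (f x)) -> (forall x, a <= x <= b -> continuous f x) ->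
  is_RInt f a b (F b - F a).
Proof.
  intros Hab H1 H2. apply (is_RInt_derive F f a b).
  intros x Hx; rewrite Rmin_left, Rmax_right in Hx by auto; apply H1; auto.
  intros x Hx; rewrite Rmin_left, Rmax_right in Hx by auto; apply H2; auto.
Qed.

Definition clamp (s r : R) : R := Rmax 0 (Rmin s r).

Lemma clamp_lip s u v : Rabs (clamp s u - clamp s v) <= Rabs (u - v).
Proof.
  unfold clamp, Rmax, Rmin.
  destruct (Rle_dec s u); destruct (Rle_dec s v);
  repeat match goal with |- context [Rle_dec ?a ?b] => destruct (Rle_dec a b) end;
  unfold Rabs; repeat match goal with |- context [Rcase_abs ?a] => destruct (Rcase_abs a) end; lra.
Qed.

Lemma clamp_cont s x : continuous (clamp s) x.
Proof.
  intros P [e He]. exists e. intros u Hu. apply He.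
  change (Rabs (clamp s u - clamp s x) < e). change (Rabs (u - x) < e) in Hu.
  eapply Rle_lt_trans; [apply clamp_lip|exact Hu].
Qed.

Lemma clamp_id s r : 0 <= r <= s -> clamp s r = r.
Proof. intros H. unfold clamp, Rmax, Rmin. repeat destruct Rle_dec; lra. Qed.
Lemma clamp_in s r : 0 <= s -> 0 <= clamp s r <= s.
Proof. intros H. unfold clamp, Rmax, Rmin. repeat destruct Rle_dec; lra. Qed.

Lemma ex_RInt_mul_prim (g f : R -> R) s : 0 <= s ->
  (forall x, 0 <= x <= s -> continuous f x) -> (forall x, 0 <= x <= s -> continuous g x) ->
  ex_RInt (fun r => g r * RInt f 0 r) 0 s.
Proof.
  intros Hs Hf Hg.
  set (f' := fun r => f (clamp s r)).
  assert (Cf' : forall x, continuous f' x).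
  { intros x. apply (C0_comp f (clamp s)). apply clamp_cont. apply Hf. apply clamp_in; auto. }
  assert (CF : forall x, continuous (fun r => RInt f' 0 r) x).
  { intros x. apply (continuous_RInt_1 f' 0 x). apply filter_forall. intros z.
    assert (E : ex_RInt f' 0 z) by (apply (ex_RInt_continuous (V := R_CompleteNormedModule)); intros; apply Cf').
    exact (RInt_correct f' 0 z E). }
  apply (ex_RInt_ext (fun r => g r * RInt f' 0 r)).
  - intros x Hx. rewrite Rmin_left, Rmax_right in Hx by auto. f_equal.
    apply RInt_ext. intros t Ht. rewrite Rmin_left, Rmax_right in Ht by lra.
    unfold f'. rewrite clamp_id; auto. lra.
  - apply (ex_RInt_continuous (V := R_CompleteNormedModule)). intros z Hz. rewrite Rmin_left, Rmax_right in Hz by auto.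
    apply C0_mult; auto.
Qed.

Theorem lemma3p1
  (gamma delta : R) (A0 A1 : mat)
  (A dA : R -> mat) (eps0 : R) (tau tt : R -> R)
  (T eps : R) (theta : R -> pt -> vec) :
  1 < gamma -> 0 < delta -> 0 < det3 A0 -> 0 < eps0 ->
  (* A solves A'' = delta (det A)^{1-gamma} A^{-T}, A(0)=A0, A'(0)=A1, A in GL+(3) *)
  (forall i j, (i < 3)%nat -> (j < 3)%nat -> A 0 i j = A0 i j /\ dA 0 i j = A1 i j) ->
  (forall t, - eps0 < t -> 0 < det3 (A t)) ->
  (forall t i j, - eps0 < t -> (i < 3)%nat -> (j < 3)%nat ->
     is_derive (fun r => A r i j) t (dA t i j)) ->
  (forall t i j, - eps0 < t -> (i < 3)%nat -> (j < 3)%nat ->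
     is_derive (fun r => dA r i j) t
       (delta * Rpower (det3 (A t)) (1 - gamma) * inv3 (A t) j i)) ->
  (* tau(t): d tau/dt = 1/mu, tau(0) = 0; tt = t as a function of tau *)
  tau 0 = 0 ->
  (forall t, - eps0 < t -> is_derive tau t (/ Rpower (det3 (A t)) (1/3))) ->
  0 < T -> 0 < eps ->
  (forall s, - eps < s < T + eps -> - eps0 < tt s /\ tau (tt s) = s) ->
  (* theta is smooth *)
  (forall i, (i < 3)%nat ->
     smooth_on (fun s y => - eps < s < T + eps /\ inOmega y) (fun s y => theta s y i)) ->
  (forall s y, 0 <= s <= T -> inOmega y -> 0 < Jac theta s y) ->
  (* the equation *)
  (forall s y i, 0 <= s <= T -> inOmega y -> (i < 3)%nat ->
     let mu := mu_of A tt in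
     let Lam := Lam_of A tt in
     let Gam := Gam_of A tt in
     let V := Vel theta in
     let al := alpha gamma in
     Rpower (wfun gamma delta y) al * Rpower (mu s) (3 * gamma - 3) *
       (Derive (fun r => V r y i) s + Derive mu s / mu s * V s y i
        + 2 * sum3 (fun j => Gam s i j * V s y j))
     + delta * Rpower (wfun gamma delta y) al * sum3 (fun l => Lam s i l * theta s y l)
     + sum3 (fun k => pdy k (fun z => Rpower (wfun gamma delta z) (1 + al) *
          sum3 (fun j => Lam s i j *
                  (Acal theta s z k j * Rpower (Jac theta s z) (- / al) - kron k j))) y)
     = 0) ->
  forall s y i j, 0 <= s <= T -> inOmega y -> (i < 3)%nat -> (j < 3)%nat ->
    let mu := mu_of A tt in
    let Lam := Lam_of A tt in
    let V := Vel theta in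
    let GV := GamV (Gam_of A tt) V in
    let Ac := Acal theta in
    let curl := fun (r : R) (F : pt -> vec) => curlLA (Lam r) (Ac r) F y i j in
    curl s (V s) =
      mu 0 * curl 0 (V 0) / mu s
      + / mu s * RInt (fun r => mu r * commLA Lam Ac V r y i j) 0 s
      - 2 / mu s * RInt (fun r => mu r * curl r (GV r)) 0 s
    /\
    curl s (theta s) =
      curl 0 (theta 0)
      + mu 0 * curl 0 (V 0) * RInt (fun r => / mu r) 0 s
      + RInt (fun r => commLA Lam Ac theta r y i j) 0 s
      + RInt (fun r => / mu r * RInt (fun q => mu q * commLA Lam Ac V q y i j) 0 r) 0 s
      - RInt (fun r => 2 / mu r * RInt (fun q => mu q * curl q (GV q)) 0 r) 0 s.
Proof.
  intros Hg Hd HA0 He0 HAinit HdetA HAd HdAd Htau0 Htau HT He Htt Hsm HJ Heq s y i j Hs Hy Hi Hj.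
  cbv zeta.
  assert (HA : AHyp A dA eps0).
  { split; [exact HdetA|split; [exact HAd|]]. intros t i' j' Ht Hi' Hj'. eexists. apply HdAd; auto. }
  assert (HTh : THyp A eps0 tau tt T eps) by (split; auto).
  assert (Hs' : SmoothTh (- eps) (T + eps) theta) by exact Hsm.
  assert (HV := Smooth_Vel _ _ theta Hs').
  set (m := mu_of A tt).
  set (c := fun r => curlLA (Lam_of A tt r) (Acal theta r) (Vel theta r) y i j).
  set (K := fun r => commLA (Lam_of A tt) (Acal theta) (Vel theta) r y i j).
  set (G := fun r => curlLA (Lam_of A tt r) (Acal theta r) (GamV (Gam_of A tt) (Vel theta) r) y i j).
  set (cT := fun r => curlLA (Lam_of A tt r) (Acal theta r) (theta r) y i j).
  set (KT := fun r => commLA (Lam_of A tt) (Acal theta) theta r y i j).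
  assert (Rng : forall r, 0 <= r <= T -> - eps < r < T + eps) by (intros; lra).
  assert (Hm : forall r, 0 <= r <= T -> 0 < m r).
  { intros r Hr. apply (mu_pos A dA eps0 tau tt T eps); auto. }
  assert (HE : forall r, 0 <= r <= T -> forall c' m' q, (c' < 3)%nat -> (m' < 3)%nat -> (q < 3)%nat ->
            ex_derive (fun r' => Lam_of A tt r' c' m' * Acal theta r' y q m') r).
  { intros r Hr c' m' q Hc Hm' Hq. apply C1_ex. apply (C1_LA A dA eps0 tau tt T eps); auto.
    apply Rgt_not_eq, HJ; auto. }
  assert (Dc : forall r, 0 <= r <= T -> is_derive c r (K r - Derive m r / m r * c r - 2 * G r)).
  { intros r Hr. eapply D_chg.
    apply (d_curl (- eps) (T + eps) (Lam_of A tt) (Acal theta) (Vel theta) r y i j HV (Rng r Hr) Hy Hi Hj (HE r Hr)).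
    assert (F3 := curl_eq gamma delta A tt T eps theta r y i j Hg Hd He Hs' HJ Heq Hr Hy Hi Hj).
    unfold K, c, G. fold m in F3 |- *. lra. }
  assert (Dm : forall r, 0 <= r <= T -> is_derive m r (Derive m r)).
  { intros r Hr. apply C1_is. apply (C1_mu A dA eps0 tau tt T eps); auto. }
  assert (Cm : forall r, 0 <= r <= T -> continuous m r).
  { intros r Hr. apply C1_C0. apply (C1_mu A dA eps0 tau tt T eps); auto. }
  assert (CK : forall r, 0 <= r <= T -> continuous K r).
  { intros r Hr. apply (C0_comm A dA eps0 tau tt T eps theta (Vel theta)); auto. apply Rgt_not_eq, HJ; auto. }
  assert (CG : forall r, 0 <= r <= T -> continuous G r).
  { intros r Hr. apply (C0_curlGV A dA eps0 tau tt T eps theta); auto. apply Rgt_not_eq, HJ; auto. }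
  assert (CmK : forall r, 0 <= r <= T -> continuous (fun q => m q * K q) r).
  { intros r Hr. apply C0_mult; auto. }
  assert (CmG : forall r, 0 <= r <= T -> continuous (fun q => m q * G q) r).
  { intros r Hr. apply C0_mult; auto. }
  assert (F1 : forall r, 0 <= r <= T ->
     c r = m 0 * c 0 / m r + / m r * RInt (fun q => m q * K q) 0 r - 2 / m r * RInt (fun q => m q * G q) 0 r).
  { intros r Hr.
    assert (I1 : is_RInt (fun q => m q * K q - 2 * (m q * G q)) 0 r (m r * c r - m 0 * c 0)).
    { apply (IR_derive (fun q => m q * c q)). lra.
      - intros x Hx. eapply D_chg. apply D_mult. apply Dm; lra. apply Dc; lra.
        assert (0 < m x) by (apply Hm; lra). field. lra.
      - intros x Hx. apply C0_minus. apply CmK; lra. apply C0_mult. apply C0_const. apply CmG; lra. }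
    assert (I2 : is_RInt (fun q => m q * K q - 2 * (m q * G q)) 0 r
                   (RInt (fun q => m q * K q) 0 r - 2 * RInt (fun q => m q * G q) 0 r)).
    { apply IR_minus. apply IR_cont. lra. intros; apply CmK; lra.
      apply IR_scal. apply IR_cont. lra. intros; apply CmG; lra. }
    assert (E := is_RInt_unique _ _ _ _ I1). rewrite (is_RInt_unique _ _ _ _ I2) in E.
    assert (0 < m r) by (apply Hm; lra). field_simplify; [|lra]. 
    apply (Rmult_eq_reg_l (m r)); [|lra]. field_simplify; [|lra]. lra. }
  split.
  { exact (F1 s Hs). }
  assert (DcT : forall r, 0 <= r <= T -> is_derive cT r (KT r + c r)).
  { intros r Hr. exact (d_curl (- eps) (T + eps) (Lam_of A tt) (Acal theta) theta r y i j Hs' (Rng r Hr) Hy Hi Hj (HE r Hr)). }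
  assert (Cc : forall r, 0 <= r <= T -> continuous c r).
  { intros r Hr. apply ex_derive_C0. eexists. apply Dc; auto. }
  assert (CKT : forall r, 0 <= r <= T -> continuous KT r).
  { intros r Hr. apply (C0_comm A dA eps0 tau tt T eps theta theta); auto. apply Rgt_not_eq, HJ; auto. }
  assert (Cim : forall r, 0 <= r <= T -> continuous (fun q => / m q) r).
  { intros r Hr. apply C0_inv; auto. apply Rgt_not_eq, Hm; auto. }
  assert (J1 : is_RInt (fun r => KT r + c r) 0 s (cT s - cT 0)).
  { apply IR_derive. lra. intros x Hx; apply DcT; lra. intros x Hx. apply C0_plus. apply CKT; lra. apply Cc; lra. }
  assert (J2 : is_RInt (fun r => KT r + c r) 0 s
     (RInt KT 0 s + (m 0 * c 0 * RInt (fun r => / m r) 0 s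
        + RInt (fun r => / m r * RInt (fun q => m q * K q) 0 r) 0 s
        - RInt (fun r => 2 / m r * RInt (fun q => m q * G q) 0 r) 0 s))).
  { apply IR_plus. apply IR_cont. lra. intros; apply CKT; lra.
    apply (IR_ext (fun r => m 0 * c 0 * / m r + / m r * RInt (fun q => m q * K q) 0 r
                           - 2 / m r * RInt (fun q => m q * G q) 0 r)).
    { intros x Hx. rewrite (F1 x) by lra. unfold Rdiv. ring. }
    lra.
    apply IR_minus. apply IR_plus. apply IR_scal. apply IR_cont. lra. intros; apply Cim; lra.
    - apply (RInt_correct (V := R_CompleteNormedModule)). apply ex_RInt_mul_prim. lra. intros; apply CmK; lra. intros; apply Cim; lra.
    - apply (RInt_correct (V := R_CompleteNormedModule)). apply ex_RInt_mul_prim. lra. intros; apply CmG; lra.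
      intros x Hx. apply C0_div. apply C0_const. apply Cm; lra. apply Rgt_not_eq, Hm; lra. }
  assert (E := is_RInt_unique _ _ _ _ J1). rewrite (is_RInt_unique _ _ _ _ J2) in E.
  unfold cT, KT, c, K, G, m in *. lra.
Qed.
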